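(* There exist a finite semidistributive extremal lattice $L$ and a subset $X$ of its set of join-irreducible elements such that the subcomplex of the canonical join complex of $L$ induced on $X$ is not (isomorphic to) the canonical join complex of any finite semidistributive lattice.
   Context: A lattice is semidistributive if $x\vee y=x\vee z$ implies $x\vee(y\wedge z)=x\vee y$ and $x\wedge y=x\wedge z$ implies $x\wedge(y\vee z)=x\wedge y$. In a finite semidistributive lattice, for each cover $b\lessdot c$ the set $\{z\mid z\le c,\ z\not\le b\}$ has a minimum $\gamma_J(b\lessdot c)$, which is join-irreducible. The canonical join complex of $L$ is the simplicial complex on the set of join-irreducible elements whose faces are the sets $D(x)=\{\gamma_J(y\lessdot x)\mid y\lessdot x\}$, $x\in L$. The induced subcomplex on $X$ consists of the faces contained in $X$. A lattice is extremal if its length (maximum number of elements of a chain minus one) equals both its number of join-irreducible elements and its number of meet-irreducible elements. *)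

(* Defs.v *)
From HB Require Import structures.
From mathcomp Require Import all_boot all_order.
Set Implicit Arguments. Unset Strict Implicit. Unset Printing Implicit Defensive.
Import Order.Theory.
Local Open Scope order_scope.

Section LatticeDefs.
Context {d : Order.disp_t} (L : finTBLatticeType d).

Definition semidistributive : Prop :=
  (forall x y z : L, x `|` y = x `|` z -> x `|` (y `&` z) = x `|` y) /\
  (forall x y z : L, x `&` y = x `&` z -> x `&` (y `|` z) = x `&` y).

Definition covers (b c : L) : bool :=
  (b < c) && [forall z : L, ~~ ((b < z) && (z < c))].

Definition is_gammaJ (b c j : L) : bool :=
  [&& j <= c, ~~ (j <= b) &
      [forall z : L, ((z <= c) && ~~ (z <= b)) ==> (j <= z)]].

Definition join_irr (j : L) : bool :=
  (j != \bot) && [forall a : L, forall b : L, (j == a `|` b) ==> ((j == a) || (j == b))].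

Definition meet_irr (m : L) : bool :=
  (m != \top) && [forall a : L, forall b : L, (m == a `&` b) ==> ((m == a) || (m == b))].

Definition JI : {set L} := [set j : L | join_irr j].
Definition MI : {set L} := [set m : L | meet_irr m].

Definition canD (x : L) : {set L} :=
  [set j : L | [exists y : L, covers y x && is_gammaJ y x j]].

Definition canonical_join_complex : {set {set L}} := [set canD x | x : L].

Definition induced_subcomplex (X : {set L}) : {set {set L}} :=
  [set A in canonical_join_complex | A \subset X].

Definition is_chain (C : {set L}) : bool :=
  [forall x in C, forall y in C, (x <= y) || (y <= x)].

Definition lattice_length : nat := ((\max_(C : {set L} | is_chain C) #|C|)%N).-1.

Definition extremal : Prop :=
  lattice_length = #|JI| /\ lattice_length = #|MI|.

End LatticeDefs.

(* simplicial complexes given by their faces; isomorphism = bijection of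
   vertex sets inducing a bijection of faces *)
Definition cx_vertices (T : finType) (K : {set {set T}}) : {set T} :=
  \bigcup_(A in K) A.

Definition complex_iso (T T' : finType) (K : {set {set T}}) (K' : {set {set T'}}) : Prop :=
  exists f : T -> T',
    [/\ {in cx_vertices K &, injective f},
        f @: cx_vertices K = cx_vertices K' &
        forall A : {set T}, A \subset cx_vertices K -> (A \in K) = (f @: A \in K')].

(* Main.v *)
Require Import Defs.
From HB Require Import structures.
From Stdlib Require Import ZArith Lia.
From mathcomp Require Import all_boot all_order.
Set Implicit Arguments. Unset Strict Implicit. Unset Printing Implicit Defensive.

(* Proof outline:
   - an explicit 49-element extremal semidistributive lattice T (10 join-irreducibles);
   - X = 9 of its join-irreducibles; the induced subcomplex is a flag disk whose
     non-edge graph is GE;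
   - general theory of finite semidistributive lattices (kappa, canonical join labels,
     pair criterion, factorization of the arrow relation);
   - a reflectively checked unsatisfiability certificate showing no semidistributive
     lattice has this complex as canonical join complex. *)


HB.instance Definition _ := hasDecEq.Build Z Z.eqb_spec.

Definition clause := seq Z.
Definition cnf := seq clause.
Definition evl (s : Z -> bool) (l : Z) : bool := if Z.ltb 0 l then s l else ~~ s (Z.opp l).
Definition csat s (c : clause) := has (evl s) c.
Definition fsat s (f : cnf) := all (csat s) f.
Definition assign (l : Z) (f : cnf) : cnf :=
  [seq [seq x <- c | ~~ Z.eqb x (Z.opp l)] | c <- f & ~~ has (Z.eqb l) c].

Fixpoint refute (n : nat) (f : cnf) : bool :=
  match n with
  | 0 => false
  | n.+1 =>
    if has (fun c => nilp c) f then true else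
    match [seq c <- f | size c == 1] with
    | (l :: _) :: _ => refute n (assign l f)
    | _ => match f with
           | (l :: _) :: _ => ~~ Z.eqb l 0 && refute n (assign l f) && refute n (assign (Z.opp l) f)
           | _ => false
           end
    end
  end.

Lemma evl_opp s l : l <> 0%Z -> evl s (Z.opp l) = ~~ evl s l.
Proof.
rewrite /evl => Hl; rewrite Z.opp_involutive.
case: (Z.ltb_spec 0 l) => H1; case: (Z.ltb_spec 0 (- l)) => H2; try lia.
- by [].
- by rewrite negbK.
Qed.

Lemma assign_sat s l f : evl s l -> fsat s f -> fsat s (assign l f).
Proof.
move=> Hl /allP Hf; apply/allP => c' /mapP [c].
rewrite mem_filter => /andP [Hlc Hc] ->.
have /hasP [x Hx Hsx] := Hf c Hc.
apply/hasP; exists x => //; rewrite mem_filter Hx andbT.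
apply/negP => /Z.eqb_spec Ex; subst x.
have [Hl0|Hl0] := Z.eq_dec l 0.
  by subst l; move: Hlc; rewrite /= => /hasP; apply; exists 0%Z.
by move: Hsx; rewrite evl_opp // Hl.
Qed.

Lemma evl_excl s l : l <> 0%Z -> evl s l || evl s (Z.opp l).
Proof. by move=> Hl0; rewrite evl_opp //; case: (evl s l). Qed.

Lemma refute_sound n f s : refute n f -> ~~ fsat s f.
Proof.
elim: n f => [//|n IH] f /=.
case: ifP => [/hasP [c Hc Hnil] _ | _].
  by move/nilP: Hnil Hc => -> Hc; apply/negP => /allP /(_ _ Hc).
have branch : forall l c r, f = (l :: c) :: r ->
   ~~ Z.eqb l 0 && refute n (assign l f) && refute n (assign (- l) f) -> ~~ fsat s f.
  move=> l c r _ /andP [/andP [H0 H1] H2]; apply/negP => Hs.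
  have H0' : l <> 0%Z by move=> E0; move: H0; rewrite E0.
  case/orP: (evl_excl s H0') => Hl.
  + by move: (IH _ H1) => /negP; apply; apply: assign_sat.
  + by move: (IH _ H2) => /negP; apply; apply: assign_sat.
case E: [seq c <- f | size c == 1] => [|[|l c'] r].
- by case: f E branch => [//|[//|l c] f] E br; apply: br.
- by case: f E branch => [//|[//|l c] f] E br; apply: br.
- move=> H; apply/negP => Hs.
  have Hin : (l :: c') \in [seq c <- f | size c == 1] by rewrite E mem_head.
  move: Hin; rewrite mem_filter => /andP [Hsz Hin].
  case: c' Hsz Hin E => // _ Hin E.
  have Hl : evl s l.
    by move/allP: Hs => /(_ _ Hin) /=; rewrite orbF.
  by move: (IH _ H) => /negP; apply; apply: assign_sat.
Qed.

Definition GE : seq (nat*nat) := [:: (0,3); (0,6); (0,7); (1,2); (1,5); (1,7); (2,4); (2,6); (3,4); (3,5); (4,7); (4,8); (5,6); (5,8); (6,8); (7,8)].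
Definition V9 := iota 0 9.
Definition gam (u v : nat) : bool := ((u,v) \in GE) || ((v,u) \in GE).
Definition dlt (u v : nat) : bool := (u != v) && ~~ gam u v.
Definition enc (k u v w : nat) : Z := Z.of_nat (1 + k * 729 + u * 81 + v * 9 + w).
Definition pP u v := enc 0 u v 0.
Definition pQ u v := enc 1 u v 0.
Definition pT u w v := enc 2 u w v.
Definition nL (z : Z) := Z.opp z.

Definition cnf_refl : cnf := [seq [:: pP u u] | u <- V9] ++ [seq [:: pQ u u] | u <- V9].
Definition cnf_delta : cnf :=
  flatten [seq flatten [seq (if dlt u v then [seq [:: nL (pP u w); nL (pQ w v)] | w <- V9] else [::]) | v <- V9] | u <- V9].
Definition cnf_anti : cnf :=
  flatten [seq flatten [seq (if gam u v then [:: [:: nL (pP u v); nL (pP v u)]; [:: nL (pP u v); nL (pQ v u)]] else [::]) | v <- V9] | u <- V9].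
Definition cnf_trans : cnf :=
  flatten [seq flatten [seq flatten [seq (if gam u v && gam v w then
     [:: [:: nL (pP u v); nL (pP v w); pP u w];
         [:: nL (pQ u v); nL (pQ v w); pQ u w]] else [::]) | w <- V9] | v <- V9] | u <- V9].
Definition cnf_tdef : cnf :=
  flatten [seq flatten [seq flatten [seq (if gam u v then
     [:: [:: nL (pT u w v); pP u w];
         [:: nL (pT u w v); pQ w v]] else [::]) | w <- V9] | v <- V9] | u <- V9].
Definition cnf_gam : cnf :=
  flatten [seq flatten [seq (if gam u v && (u < v) then
     [:: [seq pT u w v | w <- V9] ++ [seq pT v w u | w <- V9]] else [::]) | v <- V9] | u <- V9].
Definition bigF : cnf := cnf_refl ++ cnf_delta ++ cnf_anti ++ cnf_trans ++ cnf_tdef ++ cnf_gam.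

Lemma bigF_unsat : refute 3000 bigF.
Proof. vm_compute. reflexivity. Qed.


Definition dec (z : Z) : nat * nat * nat * nat :=
  let n := (Z.to_nat z).-1 in (n %/ 729, (n %% 729) %/ 81, (n %% 81) %/ 9, n %% 9).

Lemma chk_enc : all (fun k => all (fun u => all (fun v => all (fun w =>
  (dec (enc k u v w) == (k,u,v,w)) && Z.ltb 0 (enc k u v w)) V9) V9) V9) [:: 0; 1; 2].
Proof. by vm_compute. Qed.

Lemma memV9 u : (u \in V9) = (u < 9).
Proof. by rewrite mem_iota leq0n add0n. Qed.

Lemma enc_ok k u v w : k < 3 -> u < 9 -> v < 9 -> w < 9 ->
  dec (enc k u v w) = (k,u,v,w) /\ Z.ltb 0 (enc k u v w).
Proof.
move=> Hk Hu Hv Hw.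
have Hk' : k \in [:: 0; 1; 2] by case: k Hk => [|[|[|]]].
move: (allP chk_enc k Hk') => /allP /(_ u); rewrite memV9 => /(_ Hu) /allP /(_ v).
rewrite memV9 => /(_ Hv) /allP /(_ w); rewrite memV9 => /(_ Hw) /andP [/eqP -> ->].
by [].
Qed.

Lemma gam_irr : all (fun u => ~~ gam u u) V9.
Proof. by vm_compute. Qed.

Arguments enc : simpl never.
Arguments evl : simpl never.
Arguments dec : simpl never.
Arguments pP : simpl never.
Arguments pQ : simpl never.
Arguments pT : simpl never.
Arguments nL : simpl never.

Lemma all_flatten (A : Type) (a : pred A) (ss : seq (seq A)) : all a (flatten ss) = all (all a) ss.
Proof. by elim: ss => //= s ss IH; rewrite all_cat IH. Qed.

Section SatLem.
Variables P Q : nat -> nat -> bool.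

Definition sv (t : nat * nat * nat * nat) : bool :=
  let: (k, a, b, c) := t in if k == 0 then P a b else if k == 1 then Q a b else P a b && Q b c.
Definition sZ (z : Z) : bool := sv (dec z).
Arguments sZ : simpl never.

Lemma evl_pos k u v w : k < 3 -> u < 9 -> v < 9 -> w < 9 ->
  evl sZ (enc k u v w) = sv (k,u,v,w).
Proof.
move=> Hk Hu Hv Hw; have [E1 E2] := enc_ok Hk Hu Hv Hw.
by rewrite /evl E2 /sZ E1.
Qed.

Lemma evl_neg k u v w : k < 3 -> u < 9 -> v < 9 -> w < 9 ->
  evl sZ (nL (enc k u v w)) = ~~ sv (k,u,v,w).
Proof.
move=> Hk Hu Hv Hw; have [E1 E2] := enc_ok Hk Hu Hv Hw.
rewrite /evl /nL.
have -> : Z.ltb 0 (- enc k u v w) = false.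
  by move: E2 => /Z.ltb_lt H; apply/Z.ltb_ge; lia.
by rewrite Z.opp_involutive /sZ E1.
Qed.

Hypothesis Hrefl : forall u, u < 9 -> P u u && Q u u.
Hypothesis Hdelta : forall u v w, u < 9 -> v < 9 -> w < 9 -> dlt u v -> ~~ (P u w && Q w v).
Hypothesis Hanti : forall u v, u < 9 -> v < 9 -> gam u v -> ~~ (P u v && P v u) && ~~ (P u v && Q v u).
Hypothesis HtransP : forall u v w, u < 9 -> v < 9 -> w < 9 -> P u v -> P v w -> P u w.
Hypothesis HtransQ : forall u v w, u < 9 -> v < 9 -> w < 9 -> Q u v -> Q v w -> Q u w.
Hypothesis Hgam : forall u v, u < 9 -> v < 9 -> gam u v ->
  has (fun w => P u w && Q w v) V9 || has (fun w => P v w && Q w u) V9.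

Lemma allV9 (A : Type) (a : pred A) (F : nat -> A) :
  (forall u, u < 9 -> a (F u)) -> all a (map F V9).
Proof. by move=> H; rewrite all_map; apply/allP => u; rewrite memV9 => Hu; exact: H. Qed.
Lemma allflV9 (A : Type) (a : pred A) (F : nat -> seq A) :
  (forall u, u < 9 -> all a (F u)) -> all a (flatten (map F V9)).
Proof. by move=> H; rewrite all_flatten; apply: allV9. Qed.
Lemma all_if (A : Type) (a : pred A) (b : bool) (l : seq A) : (b -> all a l) -> all a (if b then l else [::]).
Proof. by case: b => // ->. Qed.
Lemma all2 (A : Type) (a : pred A) x y : a x -> a y -> all a [:: x; y].
Proof. by move=> H1 H2; rewrite /= H1 H2. Qed.
Lemma csat1 s x : csat s [:: x] = evl s x.
Proof. by rewrite /csat /= orbF. Qed.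
Lemma csat2 s x y : csat s [:: x; y] = evl s x || evl s y.
Proof. by rewrite /csat /= orbF. Qed.
Lemma csat3 s x y z : csat s [:: x; y; z] = [|| evl s x, evl s y | evl s z].
Proof. by rewrite /csat /= orbF. Qed.

Lemma f_refl : fsat sZ cnf_refl.
Proof.
rewrite /fsat /cnf_refl all_cat; apply/andP; split; apply: allV9 => u Hu;
  rewrite csat1 ?/pP ?/pQ evl_pos //; by case/andP: (Hrefl Hu).
Qed.
Lemma f_delta : fsat sZ cnf_delta.
Proof.
rewrite /fsat /cnf_delta; apply: allflV9 => u Hu; apply: allflV9 => v Hv; apply: all_if => Hd.
apply: allV9 => w Hw; rewrite csat2 /pP /pQ !evl_neg // -negb_and.
exact: Hdelta.
Qed.
Lemma f_anti : fsat sZ cnf_anti.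
Proof.
rewrite /fsat /cnf_anti; apply: allflV9 => u Hu; apply: allflV9 => v Hv; apply: all_if => Hg.
case/andP: (Hanti Hu Hv Hg) => H1 H2.
by apply: all2; rewrite csat2 /pP /pQ !evl_neg // -negb_and.
Qed.
Lemma f_trans : fsat sZ cnf_trans.
Proof.
rewrite /fsat /cnf_trans; apply: allflV9 => u Hu; apply: allflV9 => v Hv; apply: allflV9 => w Hw.
apply: all_if => /andP [Hg1 Hg2]; apply: all2; rewrite csat3 /pP /pQ !evl_neg // !evl_pos //.
  rewrite /sv; by case Huv: (P u v); case Hvw: (P v w); rewrite ?orbT // (HtransP Hu Hv Hw Huv Hvw) !orbT.
rewrite /sv; by case Huv: (Q u v); case Hvw: (Q v w); rewrite ?orbT // (HtransQ Hu Hv Hw Huv Hvw) !orbT.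
Qed.
Lemma f_tdef : fsat sZ cnf_tdef.
Proof.
rewrite /fsat /cnf_tdef; apply: allflV9 => u Hu; apply: allflV9 => v Hv; apply: allflV9 => w Hw.
apply: all_if => Hg; apply: all2; rewrite csat2 /pP /pQ /pT evl_neg // !evl_pos //.
  by rewrite /sv; case: (P u w); case: (Q w v).
by rewrite /sv; case: (P u w); case: (Q w v).
Qed.
Lemma f_gam : fsat sZ cnf_gam.
Proof.
rewrite /fsat /cnf_gam; apply: allflV9 => u Hu; apply: allflV9 => v Hv.
apply: all_if => /andP [Hg _]; rewrite /all andbT /csat has_cat !has_map.
have -> : has (preim (fun w => pT u w v) (evl sZ)) V9 = has (fun w => P u w && Q w v) V9.
  by apply: eq_in_has => w; rewrite memV9 => Hw; exact: (@evl_pos 2 u w v isT Hu Hw Hv).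
have -> : has (preim (fun w => pT v w u) (evl sZ)) V9 = has (fun w => P v w && Q w u) V9.
  by apply: eq_in_has => w; rewrite memV9 => Hw; exact: (@evl_pos 2 v w u isT Hv Hw Hu).
exact: Hgam.
Qed.

Lemma fsat_bigF : fsat sZ bigF.
Proof.
have fsat_cat : forall a b, fsat sZ (a ++ b) = fsat sZ a && fsat sZ b by move=> a b; exact: all_cat.
rewrite /bigF fsat_cat f_refl andTb fsat_cat f_delta andTb fsat_cat f_anti andTb.
by rewrite fsat_cat f_trans andTb fsat_cat f_tdef andTb f_gam.
Qed.

Lemma sat_contra : False.
Proof. by move: (refute_sound sZ bigF_unsat); rewrite fsat_bigF. Qed.

End SatLem.

Import Order.Theory.
Local Open Scope order_scope.

Section Theory.
Context {d : Order.disp_t} (L : finTBLatticeType d).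
Implicit Types x y z a b j k g w : L.

Definition jSD := forall x y z : L, x `|` y = x `|` z -> x `|` (y `&` z) = x `|` y.
Definition mSD := forall x y z : L, x `&` y = x `&` z -> x `&` (y `|` z) = x `&` y.

Lemma join_irrP j : join_irr j ->
  (j != \bot) /\ (forall a b, j = a `|` b -> j = a \/ j = b).
Proof.
move=> /andP [H0 /forallP H]; split=> // a b E.
by move: (H a) => /forallP /(_ b) /implyP /(_ (introT eqP E)) /orP [] /eqP; auto.
Qed.

Lemma join_irrI j : j != \bot -> (forall a b, j = a `|` b -> j = a \/ j = b) -> join_irr j.
Proof.
move=> H0 H; rewrite /join_irr H0 /=; apply/forallP => a; apply/forallP => b.
by apply/implyP => /eqP /H [] ->; rewrite eqxx ?orbT.
Qed.

Definition jl j : L := \join_(z | z < j) z.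

Lemma jl_ub j z : z < j -> z <= jl j.
Proof. by move=> H; apply: (@joins_sup _ _ _ z (fun t => t < j)). Qed.

Lemma jl_le j : jl j <= j.
Proof. by apply/joinsP => i /ltW. Qed.

Lemma jl_lt j : join_irr j -> jl j < j.
Proof.
case/join_irrP => H0 H; rewrite /jl.
elim/big_ind: _ => //; first by rewrite lt0x.
move=> x y Hx Hy; have Hle : x `|` y <= j by rewrite leUx (ltW Hx) (ltW Hy).
rewrite lt_neqAle Hle andbT.
by apply/eqP => /esym /H [] E; [move: Hx|move: Hy]; rewrite -E ltxx.
Qed.

Definition kap j : L := \join_(z | (jl j <= z) && ~~ (j <= z)) z.

Lemma kap_max j z : jl j <= z -> ~~ (j <= z) -> z <= kap j.
Proof. by move=> H1 H2; apply: (@joins_sup _ _ _ z (fun t => (jl j <= t) && ~~ (j <= t))); rewrite H1 H2. Qed.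

Lemma kap_ge j : join_irr j -> jl j <= kap j.
Proof. by move=> Hj; apply: kap_max => //; rewrite lt_geF // jl_lt. Qed.

Lemma kap_nge j : mSD -> join_irr j -> ~~ (j <= kap j).
Proof.
move=> SD Hj.
have Hz : forall z, jl j <= z -> ~~ (j <= z) -> j `&` z = jl j.
  move=> z H1 H2; apply/le_anti; rewrite lexI jl_le H1 /= andbT.
  have : j `&` z < j by rewrite lt_neqAle leIl andbT; apply: contra H2 => /eqP <-; exact: leIr.
  by move/jl_ub.
have : j `&` (jl j `|` kap j) = jl j.
  rewrite /kap; elim/big_rec: _ => [|z t /andP [H1 H2] IH].
    by rewrite joinx0; apply/meet_idPr; exact: jl_le.
  rewrite joinCA; rewrite -(Hz z H1 H2) in IH *.
  by apply: SD; rewrite IH.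
rewrite (join_r (kap_ge Hj)) => E; apply/negP => /meet_idPl; rewrite E => E2.
by move: (jl_lt Hj); rewrite E2 ltxx.
Qed.

Lemma coversP y x : reflect (y < x /\ forall z, y < z -> z < x -> False) (covers y x).
Proof.
apply: (iffP andP) => [[H /forallP H2]|[H H2]]; split=> //.
  by move=> z Hyz Hzx; move: (H2 z); rewrite Hyz Hzx.
by apply/forallP => z; apply/negP => /andP [] /H2; apply.
Qed.

Lemma covers_mid y x z : covers y x -> y <= z -> z <= x -> z = y \/ z = x.
Proof.
case/coversP => _ H Hyz Hzx.
case: (eqVneq z y) => [->|Nzy]; [by left|].
case: (eqVneq z x) => [->|Nzx]; [by right|].
by exfalso; apply: (H z); rewrite lt_neqAle ?Hyz ?Hzx ?andbT // eq_sym.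
Qed.

Lemma covers_lt y x : covers y x -> y < x.
Proof. by case/coversP. Qed.

Definition rk (x : L) : nat := #|[set t : L | t <= x]|.

Lemma rk_lt x y : x < y -> (rk x < rk y)%N.
Proof.
move=> Hxy; apply: proper_card; rewrite properE; apply/andP; split.
  by apply/subsetP => t; rewrite !inE => Ht; exact: le_trans Ht (ltW Hxy).
apply/subsetPn; exists y; rewrite !inE ?lexx //.
by rewrite lt_geF.
Qed.

Lemma below_cover z x : z < x -> exists y, covers y x /\ z <= y.
Proof.
move=> Hzx.
have Pz : (z <= z) && (z < x) by rewrite lexx Hzx.
case: (@arg_maxnP L z (fun t => (z <= t) && (t < x)) rk Pz) => y /andP [H1 H2] Hmax.
exists y; split=> //; apply/coversP; split=> // t Hyt Htx.
have := Hmax t; rewrite (le_trans H1 (ltW Hyt)) Htx => /(_ isT).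
by move=> /= H; move: (rk_lt Hyt); rewrite ltnNge H.
Qed.

Lemma gammaP y x g : reflect [/\ g <= x, ~~ (g <= y) & forall z, z <= x -> ~~ (z <= y) -> g <= z]
   (is_gammaJ y x g).
Proof.
apply: (iffP and3P) => [[H1 H2 /forallP H3]|[H1 H2 H3]]; split=> //.
  by move=> z Hz1 Hz2; move: (H3 z); rewrite Hz1 Hz2.
by apply/forallP => z; apply/implyP => /andP [] /H3; apply.
Qed.

Lemma gamma_uniq y x g1 g2 : is_gammaJ y x g1 -> is_gammaJ y x g2 -> g1 = g2.
Proof.
case/gammaP => A1 B1 C1 /gammaP [A2 B2 C2]; apply/le_anti.
by rewrite C1 // C2.
Qed.

Lemma gamma_ji y x g : is_gammaJ y x g -> join_irr g.
Proof.
case/gammaP => H1 H2 H3; apply: join_irrI.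
  by apply: contraNneq H2 => ->; exact: le0x.
move=> a b E.
have Ha : a <= g by rewrite E leUl.
have Hb : b <= g by rewrite E leUr.
case Ay : (a <= y); case By : (b <= y).
- by move: H2; rewrite E leUx Ay By.
- right; apply/le_anti; rewrite Hb H3 ?By //; exact: le_trans Hb H1.
- left; apply/le_anti; rewrite Ha H3 ?Ay //; exact: le_trans Ha H1.
- left; apply/le_anti; rewrite Ha H3 ?Ay //; exact: le_trans Ha H1.
Qed.

Lemma gamma_ex y x : jSD -> covers y x -> exists g, is_gammaJ y x g.
Proof.
move=> SD Hc; have Hyx := covers_lt Hc.
pose S := fun z => (z <= x) && ~~ (z <= y).
have Hjoin : forall z, S z -> y `|` z = x.
  move=> z /andP [H1 H2]; case: (covers_mid Hc (leUl y z)) => //.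
    by rewrite leUx (ltW Hyx) H1.
  by move/join_idPl => Hzy; rewrite Hzy in H2.
exists (x `&` \meet_(z | S z) z); apply/gammaP; split.
- exact: leIl.
- have : y `|` (x `&` \meet_(z | S z) z) = x.
    elim/big_rec: _ => [|z t Sz IH]; first by rewrite meetx1 (join_r (ltW Hyx)).
    rewrite meetCA; apply: (@etrans _ _ (y `|` z)); last exact: Hjoin.
    by apply: SD; rewrite Hjoin // IH.
  move=> E; apply/negP => /join_idPl; rewrite E => Exy.
  by move: Hyx; rewrite Exy ltxx.
- move=> z Hz1 Hz2; apply: le_trans (leIr _ _) _.
  by apply: (@meets_inf _ _ _ z S); rewrite /S Hz1 Hz2.
Qed.

Lemma covers_jl j : join_irr j -> covers (jl j) j.
Proof.
move=> Hj; apply/coversP; split; first exact: jl_lt.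
by move=> z H1 /jl_ub H2; move: (lt_le_trans H1 H2); rewrite ltxx.
Qed.

Lemma covers_ji j y : join_irr j -> covers y j -> y = jl j.
Proof.
move=> Hj Hc; have Hy := jl_ub (covers_lt Hc).
case: (covers_mid Hc Hy (jl_le j)) => // E.
by move: (jl_lt Hj); rewrite E ltxx.
Qed.

Lemma gamma_jl j : join_irr j -> is_gammaJ (jl j) j j.
Proof.
move=> Hj; apply/gammaP; split => //.
  by rewrite lt_geF // jl_lt.
move=> z Hz1 Hz2; case: (eqVneq z j) => [->//|Nzj].
by move: Hz2; rewrite jl_ub // lt_neqAle Nzj Hz1.
Qed.

Lemma canD_ji j : join_irr j -> canD j = [set j].
Proof.
move=> Hj; apply/setP => k; rewrite !inE; apply/existsP/eqP.
  case=> y /andP [Hc Hg]; rewrite (covers_ji Hj Hc) in Hg.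
  exact: gamma_uniq Hg (gamma_jl Hj).
by move=> ->; exists (jl j); rewrite covers_jl // gamma_jl.
Qed.

Lemma cjc_vertices : cx_vertices (canonical_join_complex L) = JI L.
Proof.
apply/setP => j; rewrite inE; apply/bigcupP/idP.
  case=> A /imsetP [x _ ->]; rewrite inE => /existsP [y /andP [_ Hg]].
  exact: gamma_ji Hg.
move=> Hj; exists [set j]; last by rewrite inE.
by rewrite -canD_ji //; apply: imset_f.
Qed.

Lemma ji_cjc j : join_irr j -> [set j] \in canonical_join_complex L.
Proof. by move=> Hj; rewrite -canD_ji //; apply: imset_f. Qed.

Lemma label_below y y' x k : jSD -> covers y x -> covers y' x -> y != y' ->
  is_gammaJ y' x k -> k <= y.
Proof.
move=> SD Hc Hc' Nyy' Hg; have Hk := gamma_ji Hg.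
case/gammaP: Hg => Hkx Hky' Hmin.
apply/negP => Hky.
have Hyx := covers_lt Hc; have Hy'x := covers_lt Hc'.
have E1 : y' `|` k = x.
  case: (covers_mid Hc' (leUl y' k)) => //; first by rewrite leUx (ltW Hy'x) Hkx.
  by move/join_idPl => Hz; rewrite Hz in Hky'.
have E2 : y' `|` y = x.
  case: (covers_mid Hc' (leUl y' y)) => //; first by rewrite leUx (ltW Hy'x) (ltW Hyx).
  move/join_idPl => Hyy'.
  case: (covers_mid Hc Hyy' (ltW Hy'x)) => E3.
    by move: Nyy'; rewrite E3 eqxx.
  by move: Hy'x; rewrite E3 ltxx.
have E3 : y' `|` (k `&` y) = x by rewrite (SD y' k y) ?E1 ?E2.
have Hjk : jl k <= y'.
  case H: (jl k <= y') => //; have := Hmin _ (le_trans (jl_le k) Hkx) (negbT H).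
  by rewrite lt_geF // jl_lt.
have Hky2 : k `&` y <= jl k.
  apply: jl_ub; rewrite lt_neqAle leIl andbT.
  by apply/eqP => E; apply: Hky; rewrite -E; exact: leIr.
move: E3; rewrite (join_l (le_trans Hky2 Hjk)) => E.
by move: Hy'x; rewrite E ltxx.
Qed.

Lemma pair_i a b : jSD -> a != b -> [set a; b] \in canonical_join_complex L -> a <= kap b.
Proof.
move=> SD Nab /imsetP [x _ Ex].
have : a \in canD x by rewrite -Ex !inE eqxx.
have : b \in canD x by rewrite -Ex !inE eqxx orbT.
rewrite !inE => /existsP [yb /andP [Hcb Hgb]] /existsP [ya /andP [Hca Hga]].
have Nab' : ya != yb.
  by apply: contra Nab => /eqP E; rewrite E in Hga; apply/eqP; exact: gamma_uniq Hga Hgb.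
have Hayb : a <= yb by apply: (label_below SD Hcb Hca) => //; rewrite eq_sym.
have Hb := gamma_ji Hgb.
case/gammaP: Hgb => Hbx Hbyb Hmin.
apply: le_trans Hayb _; apply: kap_max => //.
case H: (jl b <= yb) => //; have := Hmin _ (le_trans (jl_le b) Hbx) (negbT H).
by rewrite lt_geF // jl_lt.
Qed.

Lemma pair_ii a b : jSD -> mSD -> join_irr a -> join_irr b -> a != b ->
  a <= kap b -> b <= kap a -> [set a; b] \in canonical_join_complex L.
Proof.
move=> SD MSD Ha Hb Nab Hab Hba.
set x := a `|` b.
have lab : forall a b, join_irr a -> b <= kap a -> a `|` b = x ->
    exists ya, covers ya x /\ is_gammaJ ya x a /\ b <= ya.
  move=> a' b' Ha' Hb' Ex.
  have H1 : jl a' `|` b' < x.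
    have Hle : jl a' `|` b' <= x by rewrite -Ex leUx (le_trans (jl_le a') (leUl a' b')) leUr.
    rewrite lt_neqAle Hle andbT.
    apply/eqP => E; have : a' <= kap a'.
      by apply: le_trans (leUl a' b') _; rewrite Ex -E leUx kap_ge // Hb'.
    by move: (kap_nge MSD Ha') => /negP.
  case: (below_cover H1) => ya [Hc Hya]; exists ya; split=> //.
  rewrite leUx in Hya; case/andP: Hya => Hjl Hby; split=> //.
  case: (gamma_ex SD Hc) => g Hg; have := Hg; case/gammaP => Hgx Hgy Hmin.
  have Hay : ~~ (a' <= ya).
    apply/negP => Hay; have : x <= ya by rewrite -Ex leUx Hay.
    by move=> Hxy; move: (covers_lt Hc) => /lt_geF; rewrite Hxy.
  have Hga : g <= a' by apply: Hmin => //; rewrite -Ex leUl.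
  case: (eqVneq g a') => [<- //| Nga].
  have : g <= jl a' by apply: jl_ub; rewrite lt_neqAle Nga.
  by move=> Hgj; move: Hgy; rewrite (le_trans Hgj Hjl).
have [ya [Hca [Hga Hbya]]] := lab a b Ha Hba erefl.
have [yb [Hcb [Hgb Hayb]]] := lab b a Hb Hab (joinC b a).
have -> : [set a; b] = canD x.
  apply/setP => j; rewrite !inE; apply/idP/existsP.
    by case/orP => /eqP ->; [exists ya; rewrite Hca | exists yb; rewrite Hcb].
  case=> y /andP [Hc Hg].
  case: (eqVneq y ya) => [Ey|Nya].
    by rewrite Ey in Hg; rewrite (gamma_uniq Hg Hga) eqxx.
  case: (eqVneq y yb) => [Ey|Nyb].
    by rewrite Ey in Hg; rewrite (gamma_uniq Hg Hgb) eqxx orbT.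
  have H1 := label_below SD Hc Hca Nya Hga.
  have H2 := label_below SD Hc Hcb Nyb Hgb.
  have : x <= y by rewrite leUx H1 H2.
  by move=> Hxy; move: (covers_lt Hc) => /lt_geF; rewrite Hxy.
exact: imset_f.
Qed.

Lemma kap_alt a b : mSD -> join_irr b -> (a <= kap b) = ~~ (b <= a `|` jl b).
Proof.
move=> MSD Hb; apply/idP/idP => H.
  apply/negP => H2; have : b <= kap b by apply: le_trans H2 _; rewrite leUx H kap_ge.
  by move: (kap_nge MSD Hb) => /negP.
apply: le_trans (leUl a (jl b)) _; apply: kap_max => //; exact: leUr.
Qed.

Lemma factor a b : join_irr b -> ~~ (a <= kap b) ->
  exists w, [/\ join_irr w, w <= a & kap b <= kap w].
Proof.
move=> Hb Hab.
pose S := fun t => (t <= a) && ~~ (t <= kap b).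
have Sa : S a by rewrite /S lexx Hab.
case: (@arg_minnP L a S rk Sa) => w /andP [Hwa Hwk] Hmin.
have Hbelow : forall t, t < w -> t <= kap b.
  move=> t Htw; case Ht: (t <= kap b) => //.
  have := Hmin t; rewrite /S (le_trans (ltW Htw) Hwa) Ht => /(_ isT).
  by rewrite leqNgt rk_lt.
have Hw : join_irr w.
  apply: join_irrI.
    by apply: contraNneq Hwk => ->; exact: le0x.
  move=> c e E.
  case: (eqVneq w c) => [->|Nc]; [by left|].
  case: (eqVneq w e) => [->|Ne]; [by right|].
  exfalso; move/negP: Hwk; apply; rewrite E leUx !Hbelow //.
    by rewrite lt_neqAle eq_sym Ne E leUr.
  by rewrite lt_neqAle eq_sym Nc E leUl.
exists w; split=> //; apply: kap_max => //.
by apply: Hbelow; exact: jl_lt.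
Qed.

Lemma twoac u v : mSD -> join_irr v -> join_irr u -> v < u -> kap u <= kap v -> False.
Proof.
move=> MSD Hv Hu Hvu Hk.
have : v <= kap v by apply: le_trans (jl_ub Hvu) (le_trans (kap_ge Hu) Hk).
by move: (kap_nge MSD Hv) => /negP.
Qed.

End Theory.


Definition leT : seq (seq bool) := [:: [:: true; true; true; true; true; true; true; true; true; true; true; true; true; true; true; true; true; true; true; true; true; true; true; true; true; true; true; true; true; true; true; true; true; true; true; true; true; true; true; true; true; true; true; true; true; true; true; true; true];
 [:: false; true; false; false; true; false; true; false; false; true; true; false; true; false; true; true; false; true; true; true; false; true; true; true; true; true; false; true; true; true; true; true; true; true; true; true; true; true; true; true; true; true; true; true; true; true; true; true; true];
 [:: false; false; true; false; true; true; false; false; true; false; true; true; false; true; true; true; true; true; false; true; true; true; true; true; true; true; true; true; true; true; true; true; true; true; true; true; true; true; true; true; true; true; true; true; true; true; true; true; true];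
 [:: false; false; false; true; false; false; true; true; true; true; true; true; true; true; false; true; true; true; true; true; true; false; false; true; true; true; true; true; true; false; true; true; true; true; true; true; true; true; true; true; true; true; true; true; true; true; true; true; true];
 [:: false; false; false; false; true; false; false; false; false; false; true; false; false; false; true; true; false; true; false; true; false; true; true; true; true; true; false; true; true; true; true; true; true; true; true; true; true; true; true; true; true; true; true; true; true; true; true; true; true];
 [:: false; false; false; false; false; true; false; false; false; false; false; false; false; false; false; false; true; false; false; false; false; true; false; false; false; false; true; false; false; true; false; false; false; false; false; false; false; true; false; false; false; true; true; false; false; true; true; false; true];
 [:: false; false; false; false; false; false; true; false; false; true; true; false; true; false; false; true; false; true; true; true; false; false; false; true; true; true; false; true; true; false; true; true; true; true; true; true; true; true; true; true; true; true; true; true; true; true; true; true; true];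
 [:: false; false; false; false; false; false; false; true; false; true; false; true; false; false; false; true; true; false; true; false; true; false; false; true; true; false; true; false; true; false; true; true; false; true; true; true; true; true; true; true; true; true; true; true; true; true; true; true; true];
 [:: false; false; false; false; false; false; false; false; true; false; true; true; false; true; false; true; true; true; false; true; true; false; false; true; true; true; true; true; true; false; true; true; true; true; true; true; true; true; true; true; true; true; true; true; true; true; true; true; true];
 [:: false; false; false; false; false; false; false; false; false; true; false; false; false; false; false; true; false; false; true; false; false; false; false; true; true; false; false; false; true; false; true; true; false; true; true; true; true; true; true; true; true; true; true; true; true; true; true; true; true];
 [:: false; false; false; false; false; false; false; false; false; false; true; false; false; false; false; true; false; true; false; true; false; false; false; true; true; true; false; true; true; false; true; true; true; true; true; true; true; true; true; true; true; true; true; true; true; true; true; true; true];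
 [:: false; false; false; false; false; false; false; false; false; false; false; true; false; false; false; true; true; false; false; false; true; false; false; true; true; false; true; false; true; false; true; true; false; true; true; true; true; true; true; true; true; true; true; true; true; true; true; true; true];
 [:: false; false; false; false; false; false; false; false; false; false; false; false; true; false; false; false; false; false; true; true; false; false; false; false; true; true; false; true; false; false; true; true; true; false; true; false; true; true; true; false; true; true; true; true; true; true; true; true; true];
 [:: false; false; false; false; false; false; false; false; false; false; false; false; false; true; false; false; false; false; false; false; true; false; false; false; false; false; true; true; false; false; false; true; true; false; false; false; true; false; false; false; false; false; false; false; true; false; true; true; true];
 [:: false; false; false; false; false; false; false; false; false; false; false; false; false; false; true; false; false; false; false; false; false; true; true; false; false; false; false; false; true; true; false; false; false; true; true; true; false; true; true; true; true; true; true; true; true; true; true; true; true];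
 [:: false; false; false; false; false; false; false; false; false; false; false; false; false; false; false; true; false; false; false; false; false; false; false; true; true; false; false; false; true; false; true; true; false; true; true; true; true; true; true; true; true; true; true; true; true; true; true; true; true];
 [:: false; false; false; false; false; false; false; false; false; false; false; false; false; false; false; false; true; false; false; false; false; false; false; false; false; false; true; false; false; false; false; false; false; false; false; false; false; true; false; false; false; true; true; false; false; true; true; false; true];
 [:: false; false; false; false; false; false; false; false; false; false; false; false; false; false; false; false; false; true; false; false; false; false; false; true; false; true; false; false; false; false; true; false; true; true; false; false; true; false; true; true; false; true; false; true; false; true; false; true; true];
 [:: false; false; false; false; false; false; false; false; false; false; false; false; false; false; false; false; false; false; true; false; false; false; false; false; true; false; false; false; false; false; true; true; false; false; true; false; true; true; true; false; true; true; true; true; true; true; true; true; true];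
 [:: false; false; false; false; false; false; false; false; false; false; false; false; false; false; false; false; false; false; false; true; false; false; false; false; true; true; false; true; false; false; true; true; true; false; true; false; true; true; true; false; true; true; true; true; true; true; true; true; true];
 [:: false; false; false; false; false; false; false; false; false; false; false; false; false; false; false; false; false; false; false; false; true; false; false; false; false; false; true; false; false; false; false; true; false; false; false; false; true; false; false; false; false; false; false; false; true; false; true; true; true];
 [:: false; false; false; false; false; false; false; false; false; false; false; false; false; false; false; false; false; false; false; false; false; true; false; false; false; false; false; false; false; true; false; false; false; false; false; false; false; true; false; false; false; true; true; false; false; true; true; false; true];
 [:: false; false; false; false; false; false; false; false; false; false; false; false; false; false; false; false; false; false; false; false; false; false; true; false; false; false; false; false; false; true; false; false; false; false; false; true; false; false; false; true; true; false; true; true; true; true; true; true; true];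
 [:: false; false; false; false; false; false; false; false; false; false; false; false; false; false; false; false; false; false; false; false; false; false; false; true; false; false; false; false; false; false; true; false; false; true; false; false; true; false; true; true; false; true; false; true; false; true; false; true; true];
 [:: false; false; false; false; false; false; false; false; false; false; false; false; false; false; false; false; false; false; false; false; false; false; false; false; true; false; false; false; false; false; true; true; false; false; true; false; true; true; true; false; true; true; true; true; true; true; true; true; true];
 [:: false; false; false; false; false; false; false; false; false; false; false; false; false; false; false; false; false; false; false; false; false; false; false; false; false; true; false; false; false; false; true; false; true; false; false; false; true; false; true; false; false; true; false; true; false; true; false; true; true];
 [:: false; false; false; false; false; false; false; false; false; false; false; false; false; false; false; false; false; false; false; false; false; false; false; false; false; false; true; false; false; false; false; false; false; false; false; false; false; false; false; false; false; false; false; false; false; false; true; false; true];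
 [:: false; false; false; false; false; false; false; false; false; false; false; false; false; false; false; false; false; false; false; false; false; false; false; false; false; false; false; true; false; false; false; true; true; false; false; false; true; false; false; false; false; false; false; false; true; false; true; true; true];
 [:: false; false; false; false; false; false; false; false; false; false; false; false; false; false; false; false; false; false; false; false; false; false; false; false; false; false; false; false; true; false; false; false; false; true; true; true; false; true; true; true; true; true; true; true; true; true; true; true; true];
 [:: false; false; false; false; false; false; false; false; false; false; false; false; false; false; false; false; false; false; false; false; false; false; false; false; false; false; false; false; false; true; false; false; false; false; false; false; false; false; false; false; false; false; true; false; false; true; true; false; true];
 [:: false; false; false; false; false; false; false; false; false; false; false; false; false; false; false; false; false; false; false; false; false; false; false; false; false; false; false; false; false; false; true; false; false; false; false; false; true; false; true; false; false; true; false; true; false; true; false; true; true];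
 [:: false; false; false; false; false; false; false; false; false; false; false; false; false; false; false; false; false; false; false; false; false; false; false; false; false; false; false; false; false; false; false; true; false; false; false; false; true; false; false; false; false; false; false; false; true; false; true; true; true];
 [:: false; false; false; false; false; false; false; false; false; false; false; false; false; false; false; false; false; false; false; false; false; false; false; false; false; false; false; false; false; false; false; false; true; false; false; false; true; false; false; false; false; false; false; false; false; false; false; true; true];
 [:: false; false; false; false; false; false; false; false; false; false; false; false; false; false; false; false; false; false; false; false; false; false; false; false; false; false; false; false; false; false; false; false; false; true; false; false; false; false; true; true; false; true; false; true; false; true; false; true; true];
 [:: false; false; false; false; false; false; false; false; false; false; false; false; false; false; false; false; false; false; false; false; false; false; false; false; false; false; false; false; false; false; false; false; false; false; true; false; false; true; true; false; true; true; true; true; true; true; true; true; true];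
 [:: false; false; false; false; false; false; false; false; false; false; false; false; false; false; false; false; false; false; false; false; false; false; false; false; false; false; false; false; false; false; false; false; false; false; false; true; false; false; false; true; true; false; true; true; true; true; true; true; true];
 [:: false; false; false; false; false; false; false; false; false; false; false; false; false; false; false; false; false; false; false; false; false; false; false; false; false; false; false; false; false; false; false; false; false; false; false; false; true; false; false; false; false; false; false; false; false; false; false; true; true];
 [:: false; false; false; false; false; false; false; false; false; false; false; false; false; false; false; false; false; false; false; false; false; false; false; false; false; false; false; false; false; false; false; false; false; false; false; false; false; true; false; false; false; true; true; false; false; true; true; false; true];
 [:: false; false; false; false; false; false; false; false; false; false; false; false; false; false; false; false; false; false; false; false; false; false; false; false; false; false; false; false; false; false; false; false; false; false; false; false; false; false; true; false; false; true; false; true; false; true; false; true; true];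
 [:: false; false; false; false; false; false; false; false; false; false; false; false; false; false; false; false; false; false; false; false; false; false; false; false; false; false; false; false; false; false; false; false; false; false; false; false; false; false; false; true; false; false; false; true; false; true; false; true; true];
 [:: false; false; false; false; false; false; false; false; false; false; false; false; false; false; false; false; false; false; false; false; false; false; false; false; false; false; false; false; false; false; false; false; false; false; false; false; false; false; false; false; true; false; true; true; true; true; true; true; true];
 [:: false; false; false; false; false; false; false; false; false; false; false; false; false; false; false; false; false; false; false; false; false; false; false; false; false; false; false; false; false; false; false; false; false; false; false; false; false; false; false; false; false; true; false; false; false; true; false; false; true];
 [:: false; false; false; false; false; false; false; false; false; false; false; false; false; false; false; false; false; false; false; false; false; false; false; false; false; false; false; false; false; false; false; false; false; false; false; false; false; false; false; false; false; false; true; false; false; true; true; false; true];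
 [:: false; false; false; false; false; false; false; false; false; false; false; false; false; false; false; false; false; false; false; false; false; false; false; false; false; false; false; false; false; false; false; false; false; false; false; false; false; false; false; false; false; false; false; true; false; true; false; true; true];
 [:: false; false; false; false; false; false; false; false; false; false; false; false; false; false; false; false; false; false; false; false; false; false; false; false; false; false; false; false; false; false; false; false; false; false; false; false; false; false; false; false; false; false; false; false; true; false; true; true; true];
 [:: false; false; false; false; false; false; false; false; false; false; false; false; false; false; false; false; false; false; false; false; false; false; false; false; false; false; false; false; false; false; false; false; false; false; false; false; false; false; false; false; false; false; false; false; false; true; false; false; true];
 [:: false; false; false; false; false; false; false; false; false; false; false; false; false; false; false; false; false; false; false; false; false; false; false; false; false; false; false; false; false; false; false; false; false; false; false; false; false; false; false; false; false; false; false; false; false; false; true; false; true];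
 [:: false; false; false; false; false; false; false; false; false; false; false; false; false; false; false; false; false; false; false; false; false; false; false; false; false; false; false; false; false; false; false; false; false; false; false; false; false; false; false; false; false; false; false; false; false; false; false; true; true];
 [:: false; false; false; false; false; false; false; false; false; false; false; false; false; false; false; false; false; false; false; false; false; false; false; false; false; false; false; false; false; false; false; false; false; false; false; false; false; false; false; false; false; false; false; false; false; false; false; false; true]].
Definition mT : seq (seq nat) := [:: [:: 0; 0; 0; 0; 0; 0; 0; 0; 0; 0; 0; 0; 0; 0; 0; 0; 0; 0; 0; 0; 0; 0; 0; 0; 0; 0; 0; 0; 0; 0; 0; 0; 0; 0; 0; 0; 0; 0; 0; 0; 0; 0; 0; 0; 0; 0; 0; 0; 0];
 [:: 0; 1; 0; 0; 1; 0; 1; 0; 0; 1; 1; 0; 1; 0; 1; 1; 0; 1; 1; 1; 0; 1; 1; 1; 1; 1; 0; 1; 1; 1; 1; 1; 1; 1; 1; 1; 1; 1; 1; 1; 1; 1; 1; 1; 1; 1; 1; 1; 1];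
 [:: 0; 0; 2; 0; 2; 2; 0; 0; 2; 0; 2; 2; 0; 2; 2; 2; 2; 2; 0; 2; 2; 2; 2; 2; 2; 2; 2; 2; 2; 2; 2; 2; 2; 2; 2; 2; 2; 2; 2; 2; 2; 2; 2; 2; 2; 2; 2; 2; 2];
 [:: 0; 0; 0; 3; 0; 0; 3; 3; 3; 3; 3; 3; 3; 3; 0; 3; 3; 3; 3; 3; 3; 0; 0; 3; 3; 3; 3; 3; 3; 0; 3; 3; 3; 3; 3; 3; 3; 3; 3; 3; 3; 3; 3; 3; 3; 3; 3; 3; 3];
 [:: 0; 1; 2; 0; 4; 2; 1; 0; 2; 1; 4; 2; 1; 2; 4; 4; 2; 4; 1; 4; 2; 4; 4; 4; 4; 4; 2; 4; 4; 4; 4; 4; 4; 4; 4; 4; 4; 4; 4; 4; 4; 4; 4; 4; 4; 4; 4; 4; 4];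
 [:: 0; 0; 2; 0; 2; 5; 0; 0; 2; 0; 2; 2; 0; 2; 2; 2; 5; 2; 0; 2; 2; 5; 2; 2; 2; 2; 5; 2; 2; 5; 2; 2; 2; 2; 2; 2; 2; 5; 2; 2; 2; 5; 5; 2; 2; 5; 5; 2; 5];
 [:: 0; 1; 0; 3; 1; 0; 6; 3; 3; 6; 6; 3; 6; 3; 1; 6; 3; 6; 6; 6; 3; 1; 1; 6; 6; 6; 3; 6; 6; 1; 6; 6; 6; 6; 6; 6; 6; 6; 6; 6; 6; 6; 6; 6; 6; 6; 6; 6; 6];
 [:: 0; 0; 0; 3; 0; 0; 3; 7; 3; 7; 3; 7; 3; 3; 0; 7; 7; 3; 7; 3; 7; 0; 0; 7; 7; 3; 7; 3; 7; 0; 7; 7; 3; 7; 7; 7; 7; 7; 7; 7; 7; 7; 7; 7; 7; 7; 7; 7; 7];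
 [:: 0; 0; 2; 3; 2; 2; 3; 3; 8; 3; 8; 8; 3; 8; 2; 8; 8; 8; 3; 8; 8; 2; 2; 8; 8; 8; 8; 8; 8; 2; 8; 8; 8; 8; 8; 8; 8; 8; 8; 8; 8; 8; 8; 8; 8; 8; 8; 8; 8];
 [:: 0; 1; 0; 3; 1; 0; 6; 7; 3; 9; 6; 7; 6; 3; 1; 9; 7; 6; 9; 6; 7; 1; 1; 9; 9; 6; 7; 6; 9; 1; 9; 9; 6; 9; 9; 9; 9; 9; 9; 9; 9; 9; 9; 9; 9; 9; 9; 9; 9];
 [:: 0; 1; 2; 3; 4; 2; 6; 3; 8; 6; 10; 8; 6; 8; 4; 10; 8; 10; 6; 10; 8; 4; 4; 10; 10; 10; 8; 10; 10; 4; 10; 10; 10; 10; 10; 10; 10; 10; 10; 10; 10; 10; 10; 10; 10; 10; 10; 10; 10];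
 [:: 0; 0; 2; 3; 2; 2; 3; 7; 8; 7; 8; 11; 3; 8; 2; 11; 11; 8; 7; 8; 11; 2; 2; 11; 11; 8; 11; 8; 11; 2; 11; 11; 8; 11; 11; 11; 11; 11; 11; 11; 11; 11; 11; 11; 11; 11; 11; 11; 11];
 [:: 0; 1; 0; 3; 1; 0; 6; 3; 3; 6; 6; 3; 12; 3; 1; 6; 3; 6; 12; 12; 3; 1; 1; 6; 12; 12; 3; 12; 6; 1; 12; 12; 12; 6; 12; 6; 12; 12; 12; 6; 12; 12; 12; 12; 12; 12; 12; 12; 12];
 [:: 0; 0; 2; 3; 2; 2; 3; 3; 8; 3; 8; 8; 3; 13; 2; 8; 8; 8; 3; 8; 13; 2; 2; 8; 8; 8; 13; 13; 8; 2; 8; 13; 13; 8; 8; 8; 13; 8; 8; 8; 8; 8; 8; 8; 13; 8; 13; 13; 13];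
 [:: 0; 1; 2; 0; 4; 2; 1; 0; 2; 1; 4; 2; 1; 2; 14; 4; 2; 4; 1; 4; 2; 14; 14; 4; 4; 4; 2; 4; 14; 14; 4; 4; 4; 14; 14; 14; 4; 14; 14; 14; 14; 14; 14; 14; 14; 14; 14; 14; 14];
 [:: 0; 1; 2; 3; 4; 2; 6; 7; 8; 9; 10; 11; 6; 8; 4; 15; 11; 10; 9; 10; 11; 4; 4; 15; 15; 10; 11; 10; 15; 4; 15; 15; 10; 15; 15; 15; 15; 15; 15; 15; 15; 15; 15; 15; 15; 15; 15; 15; 15];
 [:: 0; 0; 2; 3; 2; 5; 3; 7; 8; 7; 8; 11; 3; 8; 2; 11; 16; 8; 7; 8; 11; 5; 2; 11; 11; 8; 16; 8; 11; 5; 11; 11; 8; 11; 11; 11; 11; 16; 11; 11; 11; 16; 16; 11; 11; 16; 16; 11; 16];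
 [:: 0; 1; 2; 3; 4; 2; 6; 3; 8; 6; 10; 8; 6; 8; 4; 10; 8; 17; 6; 10; 8; 4; 4; 17; 10; 17; 8; 10; 10; 4; 17; 10; 17; 17; 10; 10; 17; 10; 17; 17; 10; 17; 10; 17; 10; 17; 10; 17; 17];
 [:: 0; 1; 0; 3; 1; 0; 6; 7; 3; 9; 6; 7; 12; 3; 1; 9; 7; 6; 18; 12; 7; 1; 1; 9; 18; 12; 7; 12; 9; 1; 18; 18; 12; 9; 18; 9; 18; 18; 18; 9; 18; 18; 18; 18; 18; 18; 18; 18; 18];
 [:: 0; 1; 2; 3; 4; 2; 6; 3; 8; 6; 10; 8; 12; 8; 4; 10; 8; 10; 12; 19; 8; 4; 4; 10; 19; 19; 8; 19; 10; 4; 19; 19; 19; 10; 19; 10; 19; 19; 19; 10; 19; 19; 19; 19; 19; 19; 19; 19; 19];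
 [:: 0; 0; 2; 3; 2; 2; 3; 7; 8; 7; 8; 11; 3; 13; 2; 11; 11; 8; 7; 8; 20; 2; 2; 11; 11; 8; 20; 13; 11; 2; 11; 20; 13; 11; 11; 11; 20; 11; 11; 11; 11; 11; 11; 11; 20; 11; 20; 20; 20];
 [:: 0; 1; 2; 0; 4; 5; 1; 0; 2; 1; 4; 2; 1; 2; 14; 4; 5; 4; 1; 4; 2; 21; 14; 4; 4; 4; 5; 4; 14; 21; 4; 4; 4; 14; 14; 14; 4; 21; 14; 14; 14; 21; 21; 14; 14; 21; 21; 14; 21];
 [:: 0; 1; 2; 0; 4; 2; 1; 0; 2; 1; 4; 2; 1; 2; 14; 4; 2; 4; 1; 4; 2; 14; 22; 4; 4; 4; 2; 4; 14; 22; 4; 4; 4; 14; 14; 22; 4; 14; 14; 22; 22; 14; 22; 22; 22; 22; 22; 22; 22];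
 [:: 0; 1; 2; 3; 4; 2; 6; 7; 8; 9; 10; 11; 6; 8; 4; 15; 11; 17; 9; 10; 11; 4; 4; 23; 15; 17; 11; 10; 15; 4; 23; 15; 17; 23; 15; 15; 23; 15; 23; 23; 15; 23; 15; 23; 15; 23; 15; 23; 23];
 [:: 0; 1; 2; 3; 4; 2; 6; 7; 8; 9; 10; 11; 12; 8; 4; 15; 11; 10; 18; 19; 11; 4; 4; 15; 24; 19; 11; 19; 15; 4; 24; 24; 19; 15; 24; 15; 24; 24; 24; 15; 24; 24; 24; 24; 24; 24; 24; 24; 24];
 [:: 0; 1; 2; 3; 4; 2; 6; 3; 8; 6; 10; 8; 12; 8; 4; 10; 8; 17; 12; 19; 8; 4; 4; 17; 19; 25; 8; 19; 10; 4; 25; 19; 25; 17; 19; 10; 25; 19; 25; 17; 19; 25; 19; 25; 19; 25; 19; 25; 25];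
 [:: 0; 0; 2; 3; 2; 5; 3; 7; 8; 7; 8; 11; 3; 13; 2; 11; 16; 8; 7; 8; 20; 5; 2; 11; 11; 8; 26; 13; 11; 5; 11; 20; 13; 11; 11; 11; 20; 16; 11; 11; 11; 16; 16; 11; 20; 16; 26; 20; 26];
 [:: 0; 1; 2; 3; 4; 2; 6; 3; 8; 6; 10; 8; 12; 13; 4; 10; 8; 10; 12; 19; 13; 4; 4; 10; 19; 19; 13; 27; 10; 4; 19; 27; 27; 10; 19; 10; 27; 19; 19; 10; 19; 19; 19; 19; 27; 19; 27; 27; 27];
 [:: 0; 1; 2; 3; 4; 2; 6; 7; 8; 9; 10; 11; 6; 8; 14; 15; 11; 10; 9; 10; 11; 14; 14; 15; 15; 10; 11; 10; 28; 14; 15; 15; 10; 28; 28; 28; 15; 28; 28; 28; 28; 28; 28; 28; 28; 28; 28; 28; 28];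
 [:: 0; 1; 2; 0; 4; 5; 1; 0; 2; 1; 4; 2; 1; 2; 14; 4; 5; 4; 1; 4; 2; 21; 22; 4; 4; 4; 5; 4; 14; 29; 4; 4; 4; 14; 14; 22; 4; 21; 14; 22; 22; 21; 29; 22; 22; 29; 29; 22; 29];
 [:: 0; 1; 2; 3; 4; 2; 6; 7; 8; 9; 10; 11; 12; 8; 4; 15; 11; 17; 18; 19; 11; 4; 4; 23; 24; 25; 11; 19; 15; 4; 30; 24; 25; 23; 24; 15; 30; 24; 30; 23; 24; 30; 24; 30; 24; 30; 24; 30; 30];
 [:: 0; 1; 2; 3; 4; 2; 6; 7; 8; 9; 10; 11; 12; 13; 4; 15; 11; 10; 18; 19; 20; 4; 4; 15; 24; 19; 20; 27; 15; 4; 24; 31; 27; 15; 24; 15; 31; 24; 24; 15; 24; 24; 24; 24; 31; 24; 31; 31; 31];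
 [:: 0; 1; 2; 3; 4; 2; 6; 3; 8; 6; 10; 8; 12; 13; 4; 10; 8; 17; 12; 19; 13; 4; 4; 17; 19; 25; 13; 27; 10; 4; 25; 27; 32; 17; 19; 10; 32; 19; 25; 17; 19; 25; 19; 25; 27; 25; 27; 32; 32];
 [:: 0; 1; 2; 3; 4; 2; 6; 7; 8; 9; 10; 11; 6; 8; 14; 15; 11; 17; 9; 10; 11; 14; 14; 23; 15; 17; 11; 10; 28; 14; 23; 15; 17; 33; 28; 28; 23; 28; 33; 33; 28; 33; 28; 33; 28; 33; 28; 33; 33];
 [:: 0; 1; 2; 3; 4; 2; 6; 7; 8; 9; 10; 11; 12; 8; 14; 15; 11; 10; 18; 19; 11; 14; 14; 15; 24; 19; 11; 19; 28; 14; 24; 24; 19; 28; 34; 28; 24; 34; 34; 28; 34; 34; 34; 34; 34; 34; 34; 34; 34];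
 [:: 0; 1; 2; 3; 4; 2; 6; 7; 8; 9; 10; 11; 6; 8; 14; 15; 11; 10; 9; 10; 11; 14; 22; 15; 15; 10; 11; 10; 28; 22; 15; 15; 10; 28; 28; 35; 15; 28; 28; 35; 35; 28; 35; 35; 35; 35; 35; 35; 35];
 [:: 0; 1; 2; 3; 4; 2; 6; 7; 8; 9; 10; 11; 12; 13; 4; 15; 11; 17; 18; 19; 20; 4; 4; 23; 24; 25; 20; 27; 15; 4; 30; 31; 32; 23; 24; 15; 36; 24; 30; 23; 24; 30; 24; 30; 31; 30; 31; 36; 36];
 [:: 0; 1; 2; 3; 4; 5; 6; 7; 8; 9; 10; 11; 12; 8; 14; 15; 16; 10; 18; 19; 11; 21; 14; 15; 24; 19; 16; 19; 28; 21; 24; 24; 19; 28; 34; 28; 24; 37; 34; 28; 34; 37; 37; 34; 34; 37; 37; 34; 37];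
 [:: 0; 1; 2; 3; 4; 2; 6; 7; 8; 9; 10; 11; 12; 8; 14; 15; 11; 17; 18; 19; 11; 14; 14; 23; 24; 25; 11; 19; 28; 14; 30; 24; 25; 33; 34; 28; 30; 34; 38; 33; 34; 38; 34; 38; 34; 38; 34; 38; 38];
 [:: 0; 1; 2; 3; 4; 2; 6; 7; 8; 9; 10; 11; 6; 8; 14; 15; 11; 17; 9; 10; 11; 14; 22; 23; 15; 17; 11; 10; 28; 22; 23; 15; 17; 33; 28; 35; 23; 28; 33; 39; 35; 33; 35; 39; 35; 39; 35; 39; 39];
 [:: 0; 1; 2; 3; 4; 2; 6; 7; 8; 9; 10; 11; 12; 8; 14; 15; 11; 10; 18; 19; 11; 14; 22; 15; 24; 19; 11; 19; 28; 22; 24; 24; 19; 28; 34; 35; 24; 34; 34; 35; 40; 34; 40; 40; 40; 40; 40; 40; 40];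
 [:: 0; 1; 2; 3; 4; 5; 6; 7; 8; 9; 10; 11; 12; 8; 14; 15; 16; 17; 18; 19; 11; 21; 14; 23; 24; 25; 16; 19; 28; 21; 30; 24; 25; 33; 34; 28; 30; 37; 38; 33; 34; 41; 37; 38; 34; 41; 37; 38; 41];
 [:: 0; 1; 2; 3; 4; 5; 6; 7; 8; 9; 10; 11; 12; 8; 14; 15; 16; 10; 18; 19; 11; 21; 22; 15; 24; 19; 16; 19; 28; 29; 24; 24; 19; 28; 34; 35; 24; 37; 34; 35; 40; 37; 42; 40; 40; 42; 42; 40; 42];
 [:: 0; 1; 2; 3; 4; 2; 6; 7; 8; 9; 10; 11; 12; 8; 14; 15; 11; 17; 18; 19; 11; 14; 22; 23; 24; 25; 11; 19; 28; 22; 30; 24; 25; 33; 34; 35; 30; 34; 38; 39; 40; 38; 40; 43; 40; 43; 40; 43; 43];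
 [:: 0; 1; 2; 3; 4; 2; 6; 7; 8; 9; 10; 11; 12; 13; 14; 15; 11; 10; 18; 19; 20; 14; 22; 15; 24; 19; 20; 27; 28; 22; 24; 31; 27; 28; 34; 35; 31; 34; 34; 35; 40; 34; 40; 40; 44; 40; 44; 44; 44];
 [:: 0; 1; 2; 3; 4; 5; 6; 7; 8; 9; 10; 11; 12; 8; 14; 15; 16; 17; 18; 19; 11; 21; 22; 23; 24; 25; 16; 19; 28; 29; 30; 24; 25; 33; 34; 35; 30; 37; 38; 39; 40; 41; 42; 43; 40; 45; 42; 43; 45];
 [:: 0; 1; 2; 3; 4; 5; 6; 7; 8; 9; 10; 11; 12; 13; 14; 15; 16; 10; 18; 19; 20; 21; 22; 15; 24; 19; 26; 27; 28; 29; 24; 31; 27; 28; 34; 35; 31; 37; 34; 35; 40; 37; 42; 40; 44; 42; 46; 44; 46];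
 [:: 0; 1; 2; 3; 4; 2; 6; 7; 8; 9; 10; 11; 12; 13; 14; 15; 11; 17; 18; 19; 20; 14; 22; 23; 24; 25; 20; 27; 28; 22; 30; 31; 32; 33; 34; 35; 36; 34; 38; 39; 40; 38; 40; 43; 44; 43; 44; 47; 47];
 [:: 0; 1; 2; 3; 4; 5; 6; 7; 8; 9; 10; 11; 12; 13; 14; 15; 16; 17; 18; 19; 20; 21; 22; 23; 24; 25; 26; 27; 28; 29; 30; 31; 32; 33; 34; 35; 36; 37; 38; 39; 40; 41; 42; 43; 44; 45; 46; 47; 48]].
Definition jT : seq (seq nat) := [:: [:: 0; 1; 2; 3; 4; 5; 6; 7; 8; 9; 10; 11; 12; 13; 14; 15; 16; 17; 18; 19; 20; 21; 22; 23; 24; 25; 26; 27; 28; 29; 30; 31; 32; 33; 34; 35; 36; 37; 38; 39; 40; 41; 42; 43; 44; 45; 46; 47; 48];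
 [:: 1; 1; 4; 6; 4; 21; 6; 9; 10; 9; 10; 15; 12; 27; 14; 15; 37; 17; 18; 19; 31; 21; 22; 23; 24; 25; 46; 27; 28; 29; 30; 31; 32; 33; 34; 35; 36; 37; 38; 39; 40; 41; 42; 43; 44; 45; 46; 47; 48];
 [:: 2; 4; 2; 8; 4; 5; 10; 11; 8; 15; 10; 11; 19; 13; 14; 15; 16; 17; 24; 19; 20; 21; 22; 23; 24; 25; 26; 27; 28; 29; 30; 31; 32; 33; 34; 35; 36; 37; 38; 39; 40; 41; 42; 43; 44; 45; 46; 47; 48];
 [:: 3; 6; 8; 3; 10; 16; 6; 7; 8; 9; 10; 11; 12; 13; 28; 15; 16; 17; 18; 19; 20; 37; 35; 23; 24; 25; 26; 27; 28; 42; 30; 31; 32; 33; 34; 35; 36; 37; 38; 39; 40; 41; 42; 43; 44; 45; 46; 47; 48];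
 [:: 4; 4; 4; 10; 4; 21; 10; 15; 10; 15; 10; 15; 19; 27; 14; 15; 37; 17; 24; 19; 31; 21; 22; 23; 24; 25; 46; 27; 28; 29; 30; 31; 32; 33; 34; 35; 36; 37; 38; 39; 40; 41; 42; 43; 44; 45; 46; 47; 48];
 [:: 5; 21; 5; 16; 21; 5; 37; 16; 16; 37; 37; 16; 37; 26; 21; 37; 16; 41; 37; 37; 26; 21; 29; 41; 37; 41; 26; 46; 37; 29; 41; 46; 48; 41; 37; 42; 48; 37; 41; 45; 42; 41; 42; 45; 46; 45; 46; 48; 48];
 [:: 6; 6; 10; 6; 10; 37; 6; 9; 10; 9; 10; 15; 12; 27; 28; 15; 37; 17; 18; 19; 31; 37; 35; 23; 24; 25; 46; 27; 28; 42; 30; 31; 32; 33; 34; 35; 36; 37; 38; 39; 40; 41; 42; 43; 44; 45; 46; 47; 48];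
 [:: 7; 9; 11; 7; 15; 16; 9; 7; 11; 9; 15; 11; 18; 20; 28; 15; 16; 23; 18; 24; 20; 37; 35; 23; 24; 30; 26; 31; 28; 42; 30; 31; 36; 33; 34; 35; 36; 37; 38; 39; 40; 41; 42; 43; 44; 45; 46; 47; 48];
 [:: 8; 10; 8; 8; 10; 16; 10; 11; 8; 15; 10; 11; 19; 13; 28; 15; 16; 17; 24; 19; 20; 37; 35; 23; 24; 25; 26; 27; 28; 42; 30; 31; 32; 33; 34; 35; 36; 37; 38; 39; 40; 41; 42; 43; 44; 45; 46; 47; 48];
 [:: 9; 9; 15; 9; 15; 37; 9; 9; 15; 9; 15; 15; 18; 31; 28; 15; 37; 23; 18; 24; 31; 37; 35; 23; 24; 30; 46; 31; 28; 42; 30; 31; 36; 33; 34; 35; 36; 37; 38; 39; 40; 41; 42; 43; 44; 45; 46; 47; 48];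
 [:: 10; 10; 10; 10; 10; 37; 10; 15; 10; 15; 10; 15; 19; 27; 28; 15; 37; 17; 24; 19; 31; 37; 35; 23; 24; 25; 46; 27; 28; 42; 30; 31; 32; 33; 34; 35; 36; 37; 38; 39; 40; 41; 42; 43; 44; 45; 46; 47; 48];
 [:: 11; 15; 11; 11; 15; 16; 15; 11; 11; 15; 15; 11; 24; 20; 28; 15; 16; 23; 24; 24; 20; 37; 35; 23; 24; 30; 26; 31; 28; 42; 30; 31; 36; 33; 34; 35; 36; 37; 38; 39; 40; 41; 42; 43; 44; 45; 46; 47; 48];
 [:: 12; 12; 19; 12; 19; 37; 12; 18; 19; 18; 19; 24; 12; 27; 34; 24; 37; 25; 18; 19; 31; 37; 40; 30; 24; 25; 46; 27; 34; 42; 30; 31; 32; 38; 34; 40; 36; 37; 38; 43; 40; 41; 42; 43; 44; 45; 46; 47; 48];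
 [:: 13; 27; 13; 13; 27; 26; 27; 20; 13; 31; 27; 20; 27; 13; 44; 31; 26; 32; 31; 27; 20; 46; 44; 36; 31; 32; 26; 27; 44; 46; 36; 31; 32; 47; 44; 44; 36; 46; 47; 47; 44; 48; 46; 47; 44; 48; 46; 47; 48];
 [:: 14; 14; 14; 28; 14; 21; 28; 28; 28; 28; 28; 28; 34; 44; 14; 28; 37; 33; 34; 34; 44; 21; 22; 33; 34; 38; 46; 44; 28; 29; 38; 44; 47; 33; 34; 35; 47; 37; 38; 39; 40; 41; 42; 43; 44; 45; 46; 47; 48];
 [:: 15; 15; 15; 15; 15; 37; 15; 15; 15; 15; 15; 15; 24; 31; 28; 15; 37; 23; 24; 24; 31; 37; 35; 23; 24; 30; 46; 31; 28; 42; 30; 31; 36; 33; 34; 35; 36; 37; 38; 39; 40; 41; 42; 43; 44; 45; 46; 47; 48];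
 [:: 16; 37; 16; 16; 37; 16; 37; 16; 16; 37; 37; 16; 37; 26; 37; 37; 16; 41; 37; 37; 26; 37; 42; 41; 37; 41; 26; 46; 37; 42; 41; 46; 48; 41; 37; 42; 48; 37; 41; 45; 42; 41; 42; 45; 46; 45; 46; 48; 48];
 [:: 17; 17; 17; 17; 17; 41; 17; 23; 17; 23; 17; 23; 25; 32; 33; 23; 41; 17; 30; 25; 36; 41; 39; 23; 30; 25; 48; 32; 33; 45; 30; 36; 32; 33; 38; 39; 36; 41; 38; 39; 43; 41; 45; 43; 47; 45; 48; 47; 48];
 [:: 18; 18; 24; 18; 24; 37; 18; 18; 24; 18; 24; 24; 18; 31; 34; 24; 37; 30; 18; 24; 31; 37; 40; 30; 24; 30; 46; 31; 34; 42; 30; 31; 36; 38; 34; 40; 36; 37; 38; 43; 40; 41; 42; 43; 44; 45; 46; 47; 48];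
 [:: 19; 19; 19; 19; 19; 37; 19; 24; 19; 24; 19; 24; 19; 27; 34; 24; 37; 25; 24; 19; 31; 37; 40; 30; 24; 25; 46; 27; 34; 42; 30; 31; 32; 38; 34; 40; 36; 37; 38; 43; 40; 41; 42; 43; 44; 45; 46; 47; 48];
 [:: 20; 31; 20; 20; 31; 26; 31; 20; 20; 31; 31; 20; 31; 20; 44; 31; 26; 36; 31; 31; 20; 46; 44; 36; 31; 36; 26; 31; 44; 46; 36; 31; 36; 47; 44; 44; 36; 46; 47; 47; 44; 48; 46; 47; 44; 48; 46; 47; 48];
 [:: 21; 21; 21; 37; 21; 21; 37; 37; 37; 37; 37; 37; 37; 46; 21; 37; 37; 41; 37; 37; 46; 21; 29; 41; 37; 41; 46; 46; 37; 29; 41; 46; 48; 41; 37; 42; 48; 37; 41; 45; 42; 41; 42; 45; 46; 45; 46; 48; 48];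
 [:: 22; 22; 22; 35; 22; 29; 35; 35; 35; 35; 35; 35; 40; 44; 22; 35; 42; 39; 40; 40; 44; 29; 22; 39; 40; 43; 46; 44; 35; 29; 43; 44; 47; 39; 40; 35; 47; 42; 43; 39; 40; 45; 42; 43; 44; 45; 46; 47; 48];
 [:: 23; 23; 23; 23; 23; 41; 23; 23; 23; 23; 23; 23; 30; 36; 33; 23; 41; 23; 30; 30; 36; 41; 39; 23; 30; 30; 48; 36; 33; 45; 30; 36; 36; 33; 38; 39; 36; 41; 38; 39; 43; 41; 45; 43; 47; 45; 48; 47; 48];
 [:: 24; 24; 24; 24; 24; 37; 24; 24; 24; 24; 24; 24; 24; 31; 34; 24; 37; 30; 24; 24; 31; 37; 40; 30; 24; 30; 46; 31; 34; 42; 30; 31; 36; 38; 34; 40; 36; 37; 38; 43; 40; 41; 42; 43; 44; 45; 46; 47; 48];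
 [:: 25; 25; 25; 25; 25; 41; 25; 30; 25; 30; 25; 30; 25; 32; 38; 30; 41; 25; 30; 25; 36; 41; 43; 30; 30; 25; 48; 32; 38; 45; 30; 36; 32; 38; 38; 43; 36; 41; 38; 43; 43; 41; 45; 43; 47; 45; 48; 47; 48];
 [:: 26; 46; 26; 26; 46; 26; 46; 26; 26; 46; 46; 26; 46; 26; 46; 46; 26; 48; 46; 46; 26; 46; 46; 48; 46; 48; 26; 46; 46; 46; 48; 46; 48; 48; 46; 46; 48; 46; 48; 48; 46; 48; 46; 48; 46; 48; 46; 48; 48];
 [:: 27; 27; 27; 27; 27; 46; 27; 31; 27; 31; 27; 31; 27; 27; 44; 31; 46; 32; 31; 27; 31; 46; 44; 36; 31; 32; 46; 27; 44; 46; 36; 31; 32; 47; 44; 44; 36; 46; 47; 47; 44; 48; 46; 47; 44; 48; 46; 47; 48];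
 [:: 28; 28; 28; 28; 28; 37; 28; 28; 28; 28; 28; 28; 34; 44; 28; 28; 37; 33; 34; 34; 44; 37; 35; 33; 34; 38; 46; 44; 28; 42; 38; 44; 47; 33; 34; 35; 47; 37; 38; 39; 40; 41; 42; 43; 44; 45; 46; 47; 48];
 [:: 29; 29; 29; 42; 29; 29; 42; 42; 42; 42; 42; 42; 42; 46; 29; 42; 42; 45; 42; 42; 46; 29; 29; 45; 42; 45; 46; 46; 42; 29; 45; 46; 48; 45; 42; 42; 48; 42; 45; 45; 42; 45; 42; 45; 46; 45; 46; 48; 48];
 [:: 30; 30; 30; 30; 30; 41; 30; 30; 30; 30; 30; 30; 30; 36; 38; 30; 41; 30; 30; 30; 36; 41; 43; 30; 30; 30; 48; 36; 38; 45; 30; 36; 36; 38; 38; 43; 36; 41; 38; 43; 43; 41; 45; 43; 47; 45; 48; 47; 48];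
 [:: 31; 31; 31; 31; 31; 46; 31; 31; 31; 31; 31; 31; 31; 31; 44; 31; 46; 36; 31; 31; 31; 46; 44; 36; 31; 36; 46; 31; 44; 46; 36; 31; 36; 47; 44; 44; 36; 46; 47; 47; 44; 48; 46; 47; 44; 48; 46; 47; 48];
 [:: 32; 32; 32; 32; 32; 48; 32; 36; 32; 36; 32; 36; 32; 32; 47; 36; 48; 32; 36; 32; 36; 48; 47; 36; 36; 32; 48; 32; 47; 48; 36; 36; 32; 47; 47; 47; 36; 48; 47; 47; 47; 48; 48; 47; 47; 48; 48; 47; 48];
 [:: 33; 33; 33; 33; 33; 41; 33; 33; 33; 33; 33; 33; 38; 47; 33; 33; 41; 33; 38; 38; 47; 41; 39; 33; 38; 38; 48; 47; 33; 45; 38; 47; 47; 33; 38; 39; 47; 41; 38; 39; 43; 41; 45; 43; 47; 45; 48; 47; 48];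
 [:: 34; 34; 34; 34; 34; 37; 34; 34; 34; 34; 34; 34; 34; 44; 34; 34; 37; 38; 34; 34; 44; 37; 40; 38; 34; 38; 46; 44; 34; 42; 38; 44; 47; 38; 34; 40; 47; 37; 38; 43; 40; 41; 42; 43; 44; 45; 46; 47; 48];
 [:: 35; 35; 35; 35; 35; 42; 35; 35; 35; 35; 35; 35; 40; 44; 35; 35; 42; 39; 40; 40; 44; 42; 35; 39; 40; 43; 46; 44; 35; 42; 43; 44; 47; 39; 40; 35; 47; 42; 43; 39; 40; 45; 42; 43; 44; 45; 46; 47; 48];
 [:: 36; 36; 36; 36; 36; 48; 36; 36; 36; 36; 36; 36; 36; 36; 47; 36; 48; 36; 36; 36; 36; 48; 47; 36; 36; 36; 48; 36; 47; 48; 36; 36; 36; 47; 47; 47; 36; 48; 47; 47; 47; 48; 48; 47; 47; 48; 48; 47; 48];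
 [:: 37; 37; 37; 37; 37; 37; 37; 37; 37; 37; 37; 37; 37; 46; 37; 37; 37; 41; 37; 37; 46; 37; 42; 41; 37; 41; 46; 46; 37; 42; 41; 46; 48; 41; 37; 42; 48; 37; 41; 45; 42; 41; 42; 45; 46; 45; 46; 48; 48];
 [:: 38; 38; 38; 38; 38; 41; 38; 38; 38; 38; 38; 38; 38; 47; 38; 38; 41; 38; 38; 38; 47; 41; 43; 38; 38; 38; 48; 47; 38; 45; 38; 47; 47; 38; 38; 43; 47; 41; 38; 43; 43; 41; 45; 43; 47; 45; 48; 47; 48];
 [:: 39; 39; 39; 39; 39; 45; 39; 39; 39; 39; 39; 39; 43; 47; 39; 39; 45; 39; 43; 43; 47; 45; 39; 39; 43; 43; 48; 47; 39; 45; 43; 47; 47; 39; 43; 39; 47; 45; 43; 39; 43; 45; 45; 43; 47; 45; 48; 47; 48];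
 [:: 40; 40; 40; 40; 40; 42; 40; 40; 40; 40; 40; 40; 40; 44; 40; 40; 42; 43; 40; 40; 44; 42; 40; 43; 40; 43; 46; 44; 40; 42; 43; 44; 47; 43; 40; 40; 47; 42; 43; 43; 40; 45; 42; 43; 44; 45; 46; 47; 48];
 [:: 41; 41; 41; 41; 41; 41; 41; 41; 41; 41; 41; 41; 41; 48; 41; 41; 41; 41; 41; 41; 48; 41; 45; 41; 41; 41; 48; 48; 41; 45; 41; 48; 48; 41; 41; 45; 48; 41; 41; 45; 45; 41; 45; 45; 48; 45; 48; 48; 48];
 [:: 42; 42; 42; 42; 42; 42; 42; 42; 42; 42; 42; 42; 42; 46; 42; 42; 42; 45; 42; 42; 46; 42; 42; 45; 42; 45; 46; 46; 42; 42; 45; 46; 48; 45; 42; 42; 48; 42; 45; 45; 42; 45; 42; 45; 46; 45; 46; 48; 48];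
 [:: 43; 43; 43; 43; 43; 45; 43; 43; 43; 43; 43; 43; 43; 47; 43; 43; 45; 43; 43; 43; 47; 45; 43; 43; 43; 43; 48; 47; 43; 45; 43; 47; 47; 43; 43; 43; 47; 45; 43; 43; 43; 45; 45; 43; 47; 45; 48; 47; 48];
 [:: 44; 44; 44; 44; 44; 46; 44; 44; 44; 44; 44; 44; 44; 44; 44; 44; 46; 47; 44; 44; 44; 46; 44; 47; 44; 47; 46; 44; 44; 46; 47; 44; 47; 47; 44; 44; 47; 46; 47; 47; 44; 48; 46; 47; 44; 48; 46; 47; 48];
 [:: 45; 45; 45; 45; 45; 45; 45; 45; 45; 45; 45; 45; 45; 48; 45; 45; 45; 45; 45; 45; 48; 45; 45; 45; 45; 45; 48; 48; 45; 45; 45; 48; 48; 45; 45; 45; 48; 45; 45; 45; 45; 45; 45; 45; 48; 45; 48; 48; 48];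
 [:: 46; 46; 46; 46; 46; 46; 46; 46; 46; 46; 46; 46; 46; 46; 46; 46; 46; 48; 46; 46; 46; 46; 46; 48; 46; 48; 46; 46; 46; 46; 48; 46; 48; 48; 46; 46; 48; 46; 48; 48; 46; 48; 46; 48; 46; 48; 46; 48; 48];
 [:: 47; 47; 47; 47; 47; 48; 47; 47; 47; 47; 47; 47; 47; 47; 47; 47; 48; 47; 47; 47; 47; 48; 47; 47; 47; 47; 48; 47; 47; 48; 47; 47; 47; 47; 47; 47; 47; 48; 47; 47; 47; 48; 48; 47; 47; 48; 48; 47; 48];
 [:: 48; 48; 48; 48; 48; 48; 48; 48; 48; 48; 48; 48; 48; 48; 48; 48; 48; 48; 48; 48; 48; 48; 48; 48; 48; 48; 48; 48; 48; 48; 48; 48; 48; 48; 48; 48; 48; 48; 48; 48; 48; 48; 48; 48; 48; 48; 48; 48; 48]].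
Definition rkT : seq nat := [:: 0; 1; 1; 1; 2; 2; 2; 2; 2; 3; 3; 3; 3; 3; 3; 4; 4; 4; 4; 4; 4; 4; 4; 5; 5; 5; 5; 5; 5; 5; 6; 6; 6; 6; 6; 6; 7; 7; 7; 7; 7; 8; 8; 8; 8; 9; 9; 9; 10].
Definition Xn : seq nat := [:: 1; 7; 5; 17; 2; 3; 12; 22; 13].
Definition jlXn : seq nat := [:: 0; 3; 2; 10; 0; 0; 6; 14; 8].
Definition JIn : seq nat := [:: 1; 2; 3; 5; 7; 12; 13; 14; 17; 22].
Definition MIn : seq nat := [:: 18; 26; 29; 32; 36; 39; 41; 45; 46; 47].
Definition chn : seq nat := [:: 0; 1; 6; 9; 15; 24; 34; 37; 41; 45; 48].

Definition T : Type := 'I_49.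
HB.instance Definition _ := Finite.on T.

Definition mkord (i : nat) : T := @Ordinal 49 (i %% 49) (ltn_pmod i (isT : 0 < 49)).
Lemma mkord_val (x : T) : mkord (val x) = x.
Proof. by apply: val_inj; rewrite /= modn_small // ltn_ord. Qed.
Definition elems : seq T := [seq mkord i | i <- iota 0 49].
Lemma mem_elems (x : T) : x \in elems.
Proof.
apply/mapP; exists (val x); first by rewrite mem_iota /= add0n ltn_ord.
by rewrite mkord_val.
Qed.
Lemma all_elems (P : pred T) : all P elems -> forall x, P x.
Proof. by move/allP => H x; apply: H; exact: mem_elems. Qed.

Definition leL (x y : T) : bool := nth false (nth [::] leT x) y.
Definition meetL (x y : T) : T := mkord (nth 0 (nth [::] mT x) y).
Definition joinL (x y : T) : T := mkord (nth 0 (nth [::] jT x) y).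
Definition botL : T := mkord 0.
Definition topL : T := mkord 48.

Lemma chk4 : all (fun x => all (fun y => (leL x y && leL y x) ==> (x == y)) elems) elems. Proof. by vm_compute. Qed.
Lemma chk5 : all (fun x => all (fun y => all (fun z => (leL x y && leL y z) ==> leL x z) elems) elems) elems. Proof. by vm_compute. Qed.
Lemma chk6 : all (fun x => all (fun y => all (fun z => leL x (meetL y z) == leL x y && leL x z) elems) elems) elems. Proof. by vm_compute. Qed.
Lemma chk7 : all (fun x => all (fun y => all (fun z => leL (joinL x y) z == leL x z && leL y z) elems) elems) elems. Proof. by vm_compute. Qed.
Lemma leL_refl : reflexive leL.
Proof. by move=> x; apply: (@all_elems (fun x => leL x x)); vm_compute. Qed.
Lemma leL_anti : antisymmetric leL.
Proof.
move=> x y; have := @all_elems (fun x => all (fun y => (leL x y && leL y x) ==> (x == y)) elems) chk4 x.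
by move=>  /allP /(_ y (mem_elems y)) /implyP H /H /eqP.
Qed.
Lemma leL_trans : transitive leL.
Proof.
move=> y x z; have := @all_elems (fun x => all (fun y => all (fun z => (leL x y && leL y z) ==> leL x z) elems) elems) chk5 x.
move=>  /allP /(_ y (mem_elems y)) /allP /(_ z (mem_elems z)) /implyP H Hxy Hyz.
by apply: H; rewrite Hxy Hyz.
Qed.

Fact Ldisp : Order.disp_t. Proof. exact: Order.Disp tt tt. Qed.
HB.instance Definition _ := Order.Le_isPOrder.Build Ldisp T leL_refl leL_anti leL_trans.

Lemma meetLP (x y z : T) : (x <= meetL y z) = (x <= y) && (x <= z).
Proof.
have := @all_elems (fun x => all (fun y => all (fun z => leL x (meetL y z) == leL x y && leL x z) elems) elems) chk6 x.
by move=>  /allP /(_ y (mem_elems y)) /allP /(_ z (mem_elems z)) /eqP.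
Qed.
Lemma joinLP (x y z : T) : (joinL x y <= z) = (x <= z) && (y <= z).
Proof.
have := @all_elems (fun x => all (fun y => all (fun z => leL (joinL x y) z == leL x z && leL y z) elems) elems) chk7 x.
by move=>  /allP /(_ y (mem_elems y)) /allP /(_ z (mem_elems z)) /eqP.
Qed.
HB.instance Definition _ := Order.POrder_MeetJoin_isLattice.Build Ldisp T meetLP joinLP.
Lemma le0L (x : T) : botL <= x.
Proof. by apply: (@all_elems (fun x => leL botL x)); vm_compute. Qed.
Lemma leL1 (x : T) : x <= topL.
Proof. by apply: (@all_elems (fun x => leL x topL)); vm_compute. Qed.
HB.instance Definition _ := Order.hasBottom.Build Ldisp T le0L.
HB.instance Definition _ := Order.hasTop.Build Ldisp T leL1.



Definition join_irr_c (x : T) : bool :=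
  (x != botL) && all (fun a => all (fun b => (x == joinL a b) ==> ((x == a) || (x == b))) elems) elems.
Definition meet_irr_c (x : T) : bool :=
  (x != topL) && all (fun a => all (fun b => (x == meetL a b) ==> ((x == a) || (x == b))) elems) elems.
Lemma join_irrE (x : T) : join_irr x = join_irr_c x.
Proof.
rewrite /join_irr /join_irr_c; congr (_ && _).
apply/forallP/allP => [H a _|H a].
  by apply/allP => b _; exact: (forallP (H a) b).
by apply/forallP => b; exact: (allP (H a (mem_elems a)) b (mem_elems b)).
Qed.
Lemma meet_irrE (x : T) : meet_irr x = meet_irr_c x.
Proof.
rewrite /meet_irr /meet_irr_c; congr (_ && _).
apply/forallP/allP => [H a _|H a].
  by apply/allP => b _; exact: (forallP (H a) b).
by apply/forallP => b; exact: (allP (H a (mem_elems a)) b (mem_elems b)).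
Qed.
Definition covers_c (y x : T) : bool := (y < x) && all (fun z => ~~ ((y < z) && (z < x))) elems.
Lemma coversE (y x : T) : covers y x = covers_c y x.
Proof.
rewrite /covers /covers_c; congr (_ && _).
apply/forallP/allP => [H z _|H z]; [exact: H | exact: H z (mem_elems z)].
Qed.

Definition JIl : seq T := [seq mkord i | i <- JIn].
Definition MIl : seq T := [seq mkord i | i <- MIn].
Definition Xl : seq T := [seq mkord i | i <- Xn].
Definition chl : seq T := [seq mkord i | i <- chn].
Definition jlXl : seq T := [seq mkord i | i <- jlXn].
Definition Xs : {set T} := [set x in Xl].

Lemma JI_T : JI T = [set x in JIl].
Proof.
have H : all (fun x => join_irr_c x == (x \in JIl)) elems by vm_compute.
by apply/setP => x; rewrite !in_set join_irrE; apply/eqP; exact: (allP H x (mem_elems x)).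
Qed.
Lemma MI_T : MI T = [set x in MIl].
Proof.
have H : all (fun x => meet_irr_c x == (x \in MIl)) elems by vm_compute.
by apply/setP => x; rewrite !in_set meet_irrE; apply/eqP; exact: (allP H x (mem_elems x)).
Qed.
Lemma card_JI_T : #|JI T| = 10.
Proof. by rewrite JI_T cardsE; apply/card_uniqP; vm_compute. Qed.
Lemma card_MI_T : #|MI T| = 10.
Proof. by rewrite MI_T cardsE; apply/card_uniqP; vm_compute. Qed.

Definition rko (x : T) : 'I_11 := @Ordinal 11 (nth 0 rkT x %% 11) (ltn_pmod _ (isT : 0 < 11)).
Lemma chk1 : all (fun x => all (fun y => (x < y) ==> (rko x < rko y)%N) elems) elems. Proof. by vm_compute. Qed.
Lemma rko_mono (x y : T) : x < y -> (rko x < rko y)%N.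
Proof.
have := @all_elems (fun x => all (fun y => (x < y) ==> (rko x < rko y)%N) elems) chk1 x.
by move=> /allP /(_ y (mem_elems y)) /implyP.
Qed.

Lemma chain_bound (C : {set T}) : is_chain C -> (#|C| <= 11)%N.
Proof.
move=> /forallP HC.
have inj : {in C &, injective rko}.
  move=> x y Hx Hy E; move: (HC x); rewrite Hx /= => /forallP /(_ y); rewrite Hy /=.
  case: (eqVneq x y) => // Nxy /orP [] H.
    have Hlt : x < y by rewrite lt_neqAle Nxy H.
    by move: (rko_mono Hlt); rewrite E ltnn.
  have Hlt : y < x by rewrite lt_neqAle eq_sym Nxy H.
  by move: (rko_mono Hlt); rewrite E ltnn.
by rewrite -(card_in_imset inj); apply: leq_trans (max_card _) _; rewrite card_ord.
Qed.

Lemma chl_chain : is_chain [set x in chl].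
Proof.
have H : all (fun x => all (fun y => (x <= y) || (y <= x)) chl) chl by vm_compute.
apply/forallP => x; apply/implyP; rewrite inE => Hx; apply/forallP => y; apply/implyP; rewrite inE => Hy.
exact: (allP (allP H x Hx) y Hy).
Qed.

Lemma length_T : lattice_length T = 10.
Proof.
rewrite /lattice_length.
suff -> : (\max_(C : {set T} | is_chain C) #|C|)%N = 11 by [].
apply/eqP; rewrite eqn_leq; apply/andP; split.
  by apply/bigmax_leqP => C HC; exact: chain_bound.
have : #|[set x in chl]| = 11 by rewrite cardsE; apply/card_uniqP; vm_compute.
move=> <-; exact: (leq_bigmax_cond _ chl_chain).
Qed.

Lemma extremal_T : extremal T.
Proof. by rewrite /extremal length_T card_JI_T card_MI_T. Qed.

Lemma chk2 : all (fun x => all (fun y => all (fun z => (joinL x y == joinL x z) ==> (joinL x (meetL y z) == joinL x y)) elems) elems) elems. Proof. by vm_compute. Qed.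
Lemma chk3 : all (fun x => all (fun y => all (fun z => (meetL x y == meetL x z) ==> (meetL x (joinL y z) == meetL x y)) elems) elems) elems. Proof. by vm_compute. Qed.
Lemma T_SD : semidistributive T.
Proof.
split=> x y z.
- have := @all_elems (fun x => all (fun y => all (fun z => (joinL x y == joinL x z) ==> (joinL x (meetL y z) == joinL x y)) elems) elems) chk2 x.
  move=> /allP /(_ y (mem_elems y)) /allP /(_ z (mem_elems z)) /implyP H E.
  by apply/eqP; apply: H; apply/eqP; exact: E.
- have := @all_elems (fun x => all (fun y => all (fun z => (meetL x y == meetL x z) ==> (meetL x (joinL y z) == meetL x y)) elems) elems) chk3 x.
  move=> /allP /(_ y (mem_elems y)) /allP /(_ z (mem_elems z)) /implyP H E.
  by apply/eqP; apply: H; apply/eqP; exact: E.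
Qed.

Lemma Xs_JI : Xs \subset JI T.
Proof.
have H : all join_irr_c Xl by vm_compute.
by apply/subsetP => x; rewrite !in_set join_irrE => Hx; exact: (allP H x Hx).
Qed.


Definition xs (u : nat) : T := nth botL Xl u.
Definition jlx (u : nat) : T := nth botL jlXl u.

Lemma size_Xl : size Xl = 9. Proof. by []. Qed.
Lemma uniq_Xl : uniq Xl. Proof. by vm_compute. Qed.

Lemma xs_in u : (u < 9)%N -> xs u \in Xs.
Proof. by move=> Hu; rewrite in_set /xs; apply: mem_nth. Qed.

Lemma xs_inj u v : (u < 9)%N -> (v < 9)%N -> xs u = xs v -> u = v.
Proof. by move=> Hu Hv /eqP; rewrite /xs nth_uniq ?uniq_Xl // => /eqP. Qed.

Lemma xs_ji u : (u < 9)%N -> join_irr (xs u).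
Proof. by move=> Hu; have := subsetP Xs_JI _ (xs_in Hu); rewrite in_set. Qed.

Lemma Xs_nth x : x \in Xs -> exists2 u, (u < 9)%N & x = xs u.
Proof.
rewrite in_set => Hx; exists (index x Xl); first by rewrite -size_Xl index_mem.
by rewrite /xs nth_index.
Qed.

Lemma T_jSD : jSD T. Proof. exact: T_SD.1. Qed.
Lemma T_mSD : mSD T. Proof. exact: T_SD.2. Qed.

Lemma chk_jl : all (fun u => covers_c (jlx u) (xs u)) V9. Proof. by vm_compute. Qed.
Lemma jl_xs u : (u < 9)%N -> jl (xs u) = jlx u.
Proof.
move=> Hu; symmetry; apply: covers_ji; first exact: xs_ji.
rewrite coversE; apply: (allP chk_jl); by rewrite mem_iota.
Qed.

Lemma chk_pairs : all (fun u => all (fun v => (u != v) ==>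
  ((~~ (xs v <= xs u `|` jlx v)) && (~~ (xs u <= xs v `|` jlx u)) == dlt u v)) V9) V9.
Proof. by vm_compute. Qed.

Lemma pair_T u v : (u < 9)%N -> (v < 9)%N -> u != v ->
  ([set xs u; xs v] \in canonical_join_complex T) = dlt u v.
Proof.
move=> Hu Hv Nuv.
have Nx : xs u != xs v by apply: contra Nuv => /eqP /xs_inj; move=> /(_ Hu Hv) ->.
have E : ([set xs u; xs v] \in canonical_join_complex T) =
         (xs u <= kap (xs v)) && (xs v <= kap (xs u)).
  apply/idP/idP.
    move=> H; rewrite (pair_i T_jSD Nx H) /=.
    by apply: (pair_i T_jSD); rewrite 1?eq_sym // setUC.
  by case/andP => H1 H2; apply: pair_ii => //; [exact: T_jSD|exact: T_mSD|exact: xs_ji|exact: xs_ji].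
rewrite E !kap_alt ?xs_ji //; try exact: T_mSD.
rewrite !jl_xs //.
have := allP chk_pairs u; rewrite mem_iota => /(_ Hu) /allP /(_ v); rewrite mem_iota => /(_ Hv).
by rewrite Nuv => /eqP.
Qed.

Lemma vert_K : cx_vertices (induced_subcomplex Xs) = Xs.
Proof.
apply/setP => x; apply/bigcupP/idP.
  by case=> A; rewrite in_set => /andP [_ /subsetP HA] /HA.
move=> Hx; exists [set x]; last by rewrite in_set1.
rewrite in_set sub1set Hx andbT; apply: ji_cjc.
by have := subsetP Xs_JI _ Hx; rewrite in_set.
Qed.


Section Contra.
Variables (d' : Order.disp_t) (L' : finTBLatticeType d').
Hypothesis SD' : semidistributive L'.
Variable f : T -> L'.
Hypothesis Hinj : {in cx_vertices (induced_subcomplex Xs) &, injective f}.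
Hypothesis Hsurj : f @: cx_vertices (induced_subcomplex Xs) = cx_vertices (canonical_join_complex L').
Hypothesis Hfaces : forall A : {set T}, A \subset cx_vertices (induced_subcomplex Xs) ->
   (A \in induced_subcomplex Xs) = (f @: A \in canonical_join_complex L').

Let jSD' : jSD L' := SD'.1.
Let mSD' : mSD L' := SD'.2.

Lemma fx_ji u : (u < 9)%N -> join_irr (f (xs u)).
Proof.
move=> Hu; have : f (xs u) \in f @: Xs by apply: imset_f; exact: xs_in.
by rewrite -vert_K Hsurj cjc_vertices in_set.
Qed.

Lemma surj_ji w : join_irr w -> exists2 u, (u < 9)%N & w = f (xs u).
Proof.
move=> Hw; have : w \in JI L' by rewrite in_set.
rewrite -cjc_vertices -Hsurj vert_K => /imsetP [x Hx ->].
by case: (Xs_nth Hx) => u Hu ->; exists u.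
Qed.

Lemma fx_inj u v : (u < 9)%N -> (v < 9)%N -> f (xs u) = f (xs v) -> u = v.
Proof.
move=> Hu Hv E; apply: xs_inj => //; apply: Hinj => //; rewrite vert_K; exact: xs_in.
Qed.

Lemma pair_L' u v : (u < 9)%N -> (v < 9)%N -> u != v ->
  ([set f (xs u); f (xs v)] \in canonical_join_complex L') = dlt u v.
Proof.
move=> Hu Hv Nuv.
have Hsub : [set xs u; xs v] \subset cx_vertices (induced_subcomplex Xs).
  by rewrite vert_K; apply/subsetP => x; rewrite in_set2 => /orP [] /eqP ->; apply: xs_in.
have := Hfaces Hsub; rewrite imsetU1 imset_set1 => <-.
rewrite in_set pair_T //.
by move: Hsub; rewrite vert_K => ->; rewrite andbT.
Qed.

Definition PP (u v : nat) : bool := f (xs v) <= f (xs u).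
Definition QQ (u v : nat) : bool := kap (f (xs v)) <= kap (f (xs u)).

Lemma gam_neq u v : (u < 9)%N -> gam u v -> u != v.
Proof.
move=> Hu Hg; apply/eqP => E; subst v.
by move: (allP gam_irr u); rewrite memV9 Hg => /(_ Hu).
Qed.

Lemma contra_main : False.
Proof.
apply: (@sat_contra PP QQ).
- by move=> u Hu; rewrite /PP /QQ !lexx.
- move=> u v w Hu Hv Hw Hd; apply/negP => /andP [H1 H2].
  have Nuv : u != v by case/andP: Hd.
  have Nf : f (xs u) != f (xs v) by apply: contra Nuv => /eqP /fx_inj; move=> /(_ Hu Hv) ->.
  have Hin : [set f (xs u); f (xs v)] \in canonical_join_complex L' by rewrite pair_L'.
  have Hk := pair_i jSD' Nf Hin.
  have : f (xs w) <= kap (f (xs w)) by apply: le_trans H1 (le_trans Hk H2).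
  by move: (kap_nge mSD' (fx_ji Hw)) => /negP.
- move=> u v Hu Hv Hg; have Nuv := gam_neq Hu Hg.
  have Nf : f (xs u) != f (xs v) by apply: contra Nuv => /eqP /fx_inj; move=> /(_ Hu Hv) ->.
  apply/andP; split; apply/negP => /andP [H1 H2]; rewrite /PP /QQ in H1 H2.
    have E : f (xs u) = f (xs v) by apply: le_anti; rewrite H2 H1.
    by rewrite E eqxx in Nf.
  have Hlt : f (xs v) < f (xs u) by rewrite lt_neqAle eq_sym Nf H1.
  exact: (twoac mSD' (fx_ji Hv) (fx_ji Hu) Hlt H2).
- by move=> u v w Hu Hv Hw; rewrite /PP => H1 H2; exact: le_trans H2 H1.
- by move=> u v w Hu Hv Hw; rewrite /QQ => H1 H2; exact: le_trans H2 H1.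
- move=> u v Hu Hv Hg; have Nuv := gam_neq Hu Hg.
  have Nf : f (xs u) != f (xs v) by apply: contra Nuv => /eqP /fx_inj; move=> /(_ Hu Hv) ->.
  have Hnd : dlt u v = false by rewrite /dlt Hg andbF.
  have Hnot : ~~ ((f (xs u) <= kap (f (xs v))) && (f (xs v) <= kap (f (xs u)))).
    apply/negP => /andP [H1 H2].
    have := pair_ii jSD' mSD' (fx_ji Hu) (fx_ji Hv) Nf H1 H2.
    by rewrite pair_L' // Hnd.
  case/nandP: Hnot => H.
    apply/orP; left; case: (factor (fx_ji Hv) H) => w [Hw Hwa Hk].
    case: (surj_ji Hw) => w' Hw' Ew; apply/hasP; exists w'; first by rewrite memV9.
    by rewrite /PP /QQ -Ew Hwa Hk.
  apply/orP; right; case: (factor (fx_ji Hu) H) => w [Hw Hwa Hk].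
  case: (surj_ji Hw) => w' Hw' Ew; apply/hasP; exists w'; first by rewrite memV9.
  by rewrite /PP /QQ -Ew Hwa Hk.
Qed.
End Contra.


Theorem mainTheorem14 :
  exists (d : Order.disp_t) (L : finTBLatticeType d) (X : {set L}),
    [/\ semidistributive L, extremal L, X \subset JI L &
        forall (d' : Order.disp_t) (L' : finTBLatticeType d'),
          semidistributive L' ->
          ~ complex_iso (induced_subcomplex X) (canonical_join_complex L')].
Proof.
exists Ldisp, T, Xs; split.
- exact: T_SD.
- exact: extremal_T.
- exact: Xs_JI.
- move=> d' L' SD' [f [Hinj Hsurj Hfaces]].
  exact: (contra_main SD' Hinj Hsurj Hfaces).
Qed.
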